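(* For all $A>0$, $M>0$, $\nu\in[\frac12,1)$ and $R>0$ there exists a unique positive solution $w_{A,M,\nu,R}\in\mathscr{C}^2([-R,R])$ of \[ -w''=M(A-w)w\ \text{in }(-R,R),\qquad w(\pm R)=\nu A . \] It is even and satisfies $\nu A<w_{A,M,\nu,R}(x)<A$ for all $x\in(-R,R)$. Let $\Phi(A,M,\nu,R)=w'_{A,M,\nu,R}(-R)$. Then: (1) $\Phi$ is positive and continuous; (2) $\lim_{R\to0^+}\Phi(A,M,\nu,R)=0$; (3) there exists $\gamma_{A,M,\nu}\in(0,+\infty)$ with $\gamma_{A,M,\nu}=\lim_{R\to+\infty}\Phi(A,M,\nu,R)$; the map $(A,M,\nu)\mapsto\gamma_{A,M,\nu}$ is continuous, increasing with respect to $A$ and $M$, and decreasing with respect to $\nu$; in particular $\lim_{\nu\to1}\gamma_{A,M,\nu}=0$ and $0<\gamma_{A,M,\nu}<\gamma_{A,M,\frac12}$ for $\nu\in(\frac12,1)$; (4) $R\mapsto\Phi(A,M,\nu,R)$ is an increasing homeomorphism from $(0,+\infty)$ onto $(0,\gamma_{A,M,\nu})$; (5) $\nu\mapsto\Phi(A,M,\nu,R)$ is a decreasing homeomorphism from $[\frac12,1)$ onto $(0,\Phi(A,M,\frac12,R)]$. *)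

(* Defs.v *)
From Stdlib Require Import Reals Lra.
Open Scope R_scope.

Definition Icc (a b : R) : R -> Prop := fun x => a <= x <= b.

(* derivative of f at x relative to the set D (one-sided at endpoints of an interval) *)
Definition deriv_within (D : R -> Prop) (f : R -> R) (x l : R) : Prop :=
  forall eps : R, 0 < eps -> exists delta : R, 0 < delta /\
    forall y : R, D y -> y <> x -> Rabs (y - x) < delta ->
      Rabs ((f y - f x) / (y - x) - l) < eps.

Definition cont_within (D : R -> Prop) (f : R -> R) (x : R) : Prop :=
  forall eps : R, 0 < eps -> exists delta : R, 0 < delta /\
    forall y : R, D y -> Rabs (y - x) < delta -> Rabs (f y - f x) < eps.

Definition cont_on (D : R -> Prop) (f : R -> R) : Prop :=
  forall x, D x -> cont_within D f x.

Definition C2_with (a b : R) (w w1 w2 : R -> R) : Prop :=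
  forall x, Icc a b x ->
    deriv_within (Icc a b) w x (w1 x) /\
    deriv_within (Icc a b) w1 x (w2 x) /\
    cont_within (Icc a b) w2 x.

Definition adm (A M nu Rr : R) : Prop :=
  0 < A /\ 0 < M /\ 1/2 <= nu < 1 /\ 0 < Rr.

Definition pos_sol (A M nu Rr : R) (w : R -> R) : Prop :=
  exists w1 w2 : R -> R,
    C2_with (- Rr) Rr w w1 w2 /\
    (forall x, - Rr < x < Rr -> - w2 x = M * (A - w x) * w x) /\
    w (- Rr) = nu * A /\ w Rr = nu * A /\
    (forall x, Icc (- Rr) Rr x -> 0 < w x).

Definition cont3_on (D : R -> R -> R -> Prop) (f : R -> R -> R -> R) : Prop :=
  forall a b c, D a b c -> forall eps, 0 < eps -> exists delta, 0 < delta /\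
    forall a' b' c', D a' b' c' ->
      Rabs (a' - a) < delta -> Rabs (b' - b) < delta -> Rabs (c' - c) < delta ->
      Rabs (f a' b' c' - f a b c) < eps.

Definition cont4_on (D : R -> R -> R -> R -> Prop) (f : R -> R -> R -> R -> R) : Prop :=
  forall a b c d, D a b c d -> forall eps, 0 < eps -> exists delta, 0 < delta /\
    forall a' b' c' d', D a' b' c' d' ->
      Rabs (a' - a) < delta -> Rabs (b' - b) < delta -> Rabs (c' - c) < delta ->
      Rabs (d' - d) < delta ->
      Rabs (f a' b' c' d' - f a b c d) < eps.

Definition strict_incr_on (D : R -> Prop) (f : R -> R) : Prop :=
  forall x y, D x -> D y -> x < y -> f x < f y.
Definition strict_decr_on (D : R -> Prop) (f : R -> R) : Prop :=
  forall x y, D x -> D y -> x < y -> f y < f x.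

Definition homeo_onto (D E : R -> Prop) (f : R -> R) : Prop :=
  (forall x, D x -> E (f x)) /\ cont_on D f /\
  exists g : R -> R,
    (forall y, E y -> D (g y)) /\ cont_on E g /\
    (forall x, D x -> g (f x) = x) /\ (forall y, E y -> f (g y) = y).

(* Main.v *)
Require Import Defs.
From Stdlib Require Import Reals.
From Stdlib Require Import Lra Psatz ClassicalEpsilon Ranalysis5.
From Coquelicot Require Import Coquelicot.
Open Scope R_scope.

Definition clamp (a b x : R) := Rmax a (Rmin b x).

Lemma clamp_in a b x : a <= b -> a <= clamp a b x <= b.
Proof. intros; unfold clamp, Rmax, Rmin; repeat destruct Rle_dec; lra. Qed.
Lemma clamp_id a b x : a <= x <= b -> clamp a b x = x.
Proof. intros; unfold clamp, Rmax, Rmin; repeat destruct Rle_dec; lra. Qed.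
Lemma clamp_lip a b x y : a <= b -> Rabs (clamp a b x - clamp a b y) <= Rabs (x - y).
Proof. intros; unfold clamp, Rmax, Rmin; repeat destruct Rle_dec;
  unfold Rabs; repeat destruct Rcase_abs; lra. Qed.

Lemma cont_clamp a b f : a <= b -> cont_on (Icc a b) f ->
  continuity (fun x => f (clamp a b x)).
Proof.
  intros Hab Hf x eps Heps.
  destruct (Hf (clamp a b x) (clamp_in a b x Hab) eps Heps) as [d [Hd H]].
  exists d; split; [lra|]. intros y [_ Hy].
  simpl in *; unfold R_dist in *.
  apply H. apply clamp_in; auto.
  eapply Rle_lt_trans; [apply clamp_lip; auto| exact Hy].
Qed.

Lemma cont_pt_within D f x : continuity_pt f x -> cont_within D f x.
Proof.
  intros H eps Heps. destruct (H eps Heps) as [d [Hd H2]].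
  exists d; split; auto. intros y _ Hy.
  destruct (Req_dec y x) as [->|Hne]. rewrite Rminus_diag, Rabs_R0; auto.
  apply (H2 y). split; [split; [exact I|auto]|exact Hy].
Qed.

Lemma cont_within_sub (D E : R -> Prop) f x : (forall y, E y -> D y) ->
  cont_within D f x -> cont_within E f x.
Proof.
  intros HS H eps Heps. destruct (H eps Heps) as [d [Hd H2]].
  exists d; split; auto.
Qed.

Lemma IVT_rel a b f y : a <= b -> cont_on (Icc a b) f ->
  Rmin (f a) (f b) <= y <= Rmax (f a) (f b) -> exists x, Icc a b x /\ f x = y.
Proof.
  intros Hab Hf Hy.
  pose proof (cont_clamp a b f Hab Hf) as Hc.
  assert (Ea : f (clamp a b a) = f a) by (rewrite clamp_id; auto; lra).
  assert (Eb : f (clamp a b b) = f b) by (rewrite clamp_id; auto; lra).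
  rewrite <- Ea, <- Eb in Hy.
  destruct (IVT_gen _ a b y Hc Hy) as [x [Hx Hfx]].
  exists x. rewrite Rmin_left, Rmax_right in Hx by lra.
  rewrite clamp_id in Hfx by lra. split; auto.
Qed.

Lemma ext_max a b f : a <= b -> cont_on (Icc a b) f ->
  exists x0, Icc a b x0 /\ forall x, Icc a b x -> f x <= f x0.
Proof.
  intros Hab Hf.
  destruct (continuity_ab_maj (fun x => f (clamp a b x)) a b Hab) as [x0 [H1 H2]].
  { intros; apply (cont_clamp a b f Hab Hf). }
  exists x0. split; auto. intros x Hx. specialize (H1 x Hx).
  rewrite !clamp_id in H1; auto.
Qed.

Lemma ext_min a b f : a <= b -> cont_on (Icc a b) f ->
  exists x0, Icc a b x0 /\ forall x, Icc a b x -> f x0 <= f x.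
Proof.
  intros Hab Hf.
  destruct (continuity_ab_min (fun x => f (clamp a b x)) a b Hab) as [x0 [H1 H2]].
  { intros; apply (cont_clamp a b f Hab Hf). }
  exists x0. split; auto. intros x Hx. specialize (H1 x Hx).
  rewrite !clamp_id in H1; auto.
Qed.

Lemma MVT_open a b f df : a < b -> cont_on (Icc a b) f ->
  (forall x, a < x < b -> is_derive f x (df x)) ->
  exists c, a < c < b /\ f b - f a = df c * (b - a).
Proof.
  intros Hab Hf Hd.
  set (h := fun x => f (clamp a b x)).
  assert (Hh : forall c, a < c < b -> derivable_pt_lim h c (df c)).
  { intros c Hc. apply is_derive_Reals.
    apply (is_derive_ext_loc f); [|apply Hd; auto].
    set (e := Rmin (c - a) (b - c)).
    assert (He : 0 < e) by (unfold e, Rmin; destruct Rle_dec; lra).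
    exists (mkposreal e He). intros y Hy. simpl in Hy.
    unfold ball in Hy; simpl in Hy; unfold AbsRing_ball, abs, minus, plus, opp in Hy; simpl in Hy.
    unfold h; rewrite clamp_id; auto.
    unfold e, Rmin in Hy; destruct Rle_dec; unfold Rabs in Hy; destruct Rcase_abs; lra. }
  assert (pr1 : forall c, a < c < b -> derivable_pt h c).
  { intros c Hc. exists (df c). apply Hh; auto. }
  assert (pr2 : forall c, a < c < b -> derivable_pt id c).
  { intros c Hc. apply derivable_pt_id. }
  destruct (MVT h id a b pr1 pr2 Hab) as [c [P Heq]].
  { intros; apply (cont_clamp a b f (Rlt_le _ _ Hab) Hf). }
  { intros; apply derivable_continuous_pt, derivable_pt_id. }
  exists c; split; auto.
  rewrite (derive_pt_eq_0 h c (df c) (pr1 c P) (Hh c P)) in Heq.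
  rewrite (derive_pt_eq_0 id c 1 (pr2 c P) (derivable_pt_lim_id c)) in Heq.
  unfold h, id in Heq. rewrite !clamp_id in Heq by lra. lra.
Qed.

Lemma deriv_within_interior a b f x l : a < x < b ->
  deriv_within (Icc a b) f x l -> is_derive f x l.
Proof.
  intros Hx H. apply is_derive_Reals. intros eps Heps.
  destruct (H eps Heps) as [d [Hd H2]].
  set (e := Rmin d (Rmin (x - a) (b - x))).
  assert (He : 0 < e) by (unfold e, Rmin; repeat destruct Rle_dec; lra).
  exists (mkposreal e He). intros h Hh0 Hh. simpl in Hh.
  assert (Hh' : Rabs h < d /\ Rabs h < x - a /\ Rabs h < b - x).
  { unfold e, Rmin in Hh; repeat destruct Rle_dec; repeat split; lra. }
  specialize (H2 (x + h)).
  replace (x + h - x) with h in H2 by ring.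
  apply H2; [unfold Icc; unfold Rabs in Hh'; destruct Rcase_abs; lra|lra|lra].
Qed.

Lemma is_derive_within D f x l : is_derive f x l -> deriv_within D f x l.
Proof.
  intros H eps Heps. apply is_derive_Reals in H.
  destruct (H eps Heps) as [d H2].
  exists d; split; [apply cond_pos|]. intros y _ Hy Hd.
  specialize (H2 (y - x)). replace (x + (y - x)) with y in H2 by ring.
  apply H2; auto. lra.
Qed.

Lemma deriv_within_cont D f x l : deriv_within D f x l -> cont_within D f x.
Proof.
  intros H eps Heps.
  destruct (H 1 Rlt_0_1) as [d [Hd H2]].
  exists (Rmin d (eps / (Rabs l + 1))). split.
  { unfold Rmin; destruct Rle_dec; auto. apply Rdiv_lt_0_compat; auto.
    pose proof (Rabs_pos l); lra. }
  intros y Hy Hyx.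
  destruct (Req_dec y x) as [->|Hne]. rewrite Rminus_diag, Rabs_R0; auto.
  assert (Hyx1 : Rabs (y - x) < d) by (eapply Rlt_le_trans; [exact Hyx|apply Rmin_l]).
  assert (Hyx2 : Rabs (y - x) < eps / (Rabs l + 1)) by (eapply Rlt_le_trans; [exact Hyx|apply Rmin_r]).
  specialize (H2 y Hy Hne Hyx1).
  assert (Hq : Rabs ((f y - f x) / (y - x)) < Rabs l + 1).
  { pose proof (Rabs_triang_inv ((f y - f x) / (y - x)) l). lra. }
  assert (Hnz : y - x <> 0) by lra.
  replace (f y - f x) with ((f y - f x) / (y - x) * (y - x)) by (field; auto).
  rewrite Rabs_mult.
  assert (Hpos : 0 < Rabs (y - x)) by (apply Rabs_pos_lt; auto).
  pose proof (Rabs_pos l).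
  apply Rle_lt_trans with ((Rabs l + 1) * Rabs (y - x)).
  apply Rmult_le_compat_r; lra.
  apply Rmult_lt_reg_r with (/ (Rabs l + 1)). apply Rinv_0_lt_compat; lra.
  replace ((Rabs l + 1) * Rabs (y - x) * / (Rabs l + 1)) with (Rabs (y - x)) by (field; lra).
  exact Hyx2.
Qed.

Lemma is_derive_cont_within D f x l : is_derive f x l -> cont_within D f x.
Proof. intros H; apply (deriv_within_cont D f x l), is_derive_within, H. Qed.

Lemma is_derive_cont_pt f x l : is_derive f x l -> continuity_pt f x.
Proof. intros H. apply is_derive_Reals in H. apply derivable_continuous_pt. exists l; auto. Qed.

Lemma locmax_deriv0 a b f x0 l : a < x0 < b -> (forall x, a < x < b -> f x <= f x0) ->
  is_derive f x0 l -> l = 0.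
Proof.
  intros Hx Hmax Hd. apply is_derive_Reals in Hd.
  destruct (Rtotal_order l 0) as [Hl|[Hl|Hl]]; auto; exfalso.
  - destruct (Hd (- l / 2)) as [d Hd2]; [lra|].
    set (h := - Rmin (d / 2) ((x0 - a) / 2)).
    assert (Hh1 : 0 < d / 2) by (pose proof (cond_pos d); lra).
    assert (Hh : 0 < - h /\ - h <= d / 2 /\ - h <= (x0 - a) / 2).
    { unfold h, Rmin; destruct Rle_dec; lra. }
    specialize (Hd2 h). assert (Hfx : f (x0 + h) <= f x0) by (apply Hmax; lra).
    assert (Hq : (f (x0 + h) - f x0) / h >= 0).
    { unfold Rdiv. replace ((f (x0 + h) - f x0) * / h) with ((f x0 - f (x0 + h)) * / (- h)) by (field; lra).
      apply Rle_ge, Rmult_le_pos; [lra|]. apply Rlt_le, Rinv_0_lt_compat; lra. }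
    assert (Rabs h < d) by (rewrite Rabs_left by lra; pose proof (cond_pos d); lra).
    specialize (Hd2 ltac:(lra) H). unfold Rabs in Hd2; destruct Rcase_abs; lra.
  - destruct (Hd (l / 2)) as [d Hd2]; [lra|].
    set (h := Rmin (d / 2) ((b - x0) / 2)).
    assert (Hh1 : 0 < d / 2) by (pose proof (cond_pos d); lra).
    assert (Hh : 0 < h /\ h <= d / 2 /\ h <= (b - x0) / 2).
    { unfold h, Rmin; destruct Rle_dec; lra. }
    specialize (Hd2 h). assert (Hfx : f (x0 + h) <= f x0) by (apply Hmax; lra).
    assert (Hq : (f (x0 + h) - f x0) / h <= 0).
    { unfold Rdiv. replace ((f (x0 + h) - f x0) * / h) with (- ((f x0 - f (x0 + h)) * / h)) by (field; lra).
      assert (0 <= (f x0 - f (x0 + h)) * / h); [|lra].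
      apply Rmult_le_pos; [lra|]. apply Rlt_le, Rinv_0_lt_compat; lra. }
    assert (Rabs h < d) by (rewrite Rabs_right by lra; pose proof (cond_pos d); lra).
    specialize (Hd2 ltac:(lra) H). unfold Rabs in Hd2; destruct Rcase_abs; lra.
Qed.


Lemma max_test a b f f1 x0 c : a < x0 < b -> (forall x, a < x < b -> f x <= f x0) ->
  (forall x, a < x < b -> is_derive f x (f1 x)) -> is_derive f1 x0 c -> 0 < c -> False.
Proof.
  intros Hx Hmax Hd Hd1 Hc.
  assert (H0 : f1 x0 = 0) by (apply (locmax_deriv0 a b f x0); auto).
  apply is_derive_Reals in Hd1.
  destruct (Hd1 (c / 2)) as [d Hd2]; [lra|].
  set (h := Rmin (d / 2) ((b - x0) / 2)).
  assert (Hh1 : 0 < d / 2) by (pose proof (cond_pos d); lra).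
  assert (Hh : 0 < h /\ h <= d / 2 /\ h <= (b - x0) / 2).
  { unfold h, Rmin; destruct Rle_dec; lra. }
  assert (Hpos : forall y, x0 < y <= x0 + h -> 0 < f1 y).
  { intros y Hy. specialize (Hd2 (y - x0)). replace (x0 + (y - x0)) with y in Hd2 by ring.
    rewrite H0 in Hd2.
    assert (Hq : c / 2 < (f1 y - 0) / (y - x0)).
    { assert (Rabs (y - x0) < d) by (rewrite Rabs_right by lra; pose proof (cond_pos d); lra).
      specialize (Hd2 ltac:(lra) H). unfold Rabs in Hd2; destruct Rcase_abs; lra. }
    assert (0 < (f1 y - 0) / (y - x0)) by lra.
    unfold Rdiv in H. apply Rmult_lt_reg_r with (/ (y - x0)).
    apply Rinv_0_lt_compat; lra. lra. }
  destruct (MVT_open x0 (x0 + h) f f1) as [xi [Hxi Heq]].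
  - lra.
  - intros y Hy. apply (is_derive_cont_within _ f y (f1 y)), Hd. unfold Icc in Hy; lra.
  - intros y Hy. apply Hd; lra.
  - assert (f (x0 + h) <= f x0) by (apply Hmax; lra).
    assert (0 < f1 xi * (x0 + h - x0)) by (apply Rmult_lt_0_compat; [apply Hpos|]; lra).
    lra.
Qed.

Lemma min_test a b f f1 x0 c : a < x0 < b -> (forall x, a < x < b -> f x0 <= f x) ->
  (forall x, a < x < b -> is_derive f x (f1 x)) -> is_derive f1 x0 c -> c < 0 -> False.
Proof.
  intros Hx Hmin Hd Hd1 Hc.
  apply (max_test a b (fun x => - f x) (fun x => - f1 x) x0 (- c)); auto.
  - intros x Hx'. specialize (Hmin x Hx'). lra.
  - intros x Hx'. apply (is_derive_opp f x (f1 x)), Hd; auto.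
  - apply (is_derive_opp f1 x0 c); auto.
  - lra.
Qed.


Lemma is_derive_Rminus f g x a b : is_derive f x a -> is_derive g x b ->
  is_derive (fun x => f x - g x) x (a - b).
Proof. intros H1 H2. exact (is_derive_minus f g x a b H1 H2). Qed.

Definition soldata a b (A M : R) (w w1 w2 : R -> R) :=
  (forall x, a < x < b -> is_derive w x (w1 x) /\ is_derive w1 x (w2 x) /\
      - w2 x = M * (A - w x) * w x) /\
  cont_on (Icc a b) w /\ cont_on (Icc a b) w1.

Lemma cont_on_sub a b a' b' f : a <= a' -> b' <= b -> cont_on (Icc a b) f -> cont_on (Icc a' b') f.
Proof.
  intros H1 H2 H x Hx. apply (cont_within_sub (Icc a b)).
  intros y Hy; unfold Icc in *; lra. apply H; unfold Icc in *; lra.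
Qed.

Lemma cont_on_minus D f g : cont_on D f -> cont_on D g -> cont_on D (fun x => f x - g x).
Proof.
  intros Hf Hg x Hx eps Heps.
  destruct (Hf x Hx (eps/2)) as [d1 [Hd1 H1]]; [lra|].
  destruct (Hg x Hx (eps/2)) as [d2 [Hd2 H2]]; [lra|].
  exists (Rmin d1 d2); split. unfold Rmin; destruct Rle_dec; lra.
  intros y Hy Hyx.
  assert (A1 : Rabs (y - x) < d1) by (eapply Rlt_le_trans; [exact Hyx|apply Rmin_l]).
  assert (A2 : Rabs (y - x) < d2) by (eapply Rlt_le_trans; [exact Hyx|apply Rmin_r]).
  specialize (H1 y Hy A1). specialize (H2 y Hy A2).
  replace (f y - g y - (f x - g x)) with ((f y - f x) - (g y - g x)) by ring.
  eapply Rle_lt_trans; [apply Rabs_triang|]. rewrite Rabs_Ropp. lra.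
Qed.

Lemma weak_bounds a b A M nu w w1 w2 : a < b -> 0 < A -> 0 < M -> 0 < nu < 1 ->
  soldata a b A M w w1 w2 -> w a = nu * A -> w b = nu * A ->
  (forall x, Icc a b x -> 0 < w x) ->
  forall x, Icc a b x -> nu * A <= w x <= A.
Proof.
  intros Hab HA HM Hnu [Hs [Hcw Hcw1]] Ha Hb Hpos.
  assert (Hup : forall x, Icc a b x -> w x <= A).
  { destruct (ext_max a b w (Rlt_le _ _ Hab) Hcw) as [x0 [Hx0 Hmax]].
    intros x Hx. eapply Rle_trans; [apply Hmax; auto|].
    destruct (Rle_dec (w x0) A) as [|Hgt]; auto. exfalso.
    assert (Hint : a < x0 < b).
    { unfold Icc in Hx0. split; apply Rnot_le_lt; intro; 
      [assert (x0 = a) by lra|assert (x0 = b) by lra]; subst; nra. }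
    destruct (Hs x0 Hint) as [_ [Hd2 Heq]].
    apply (max_test a b w w1 x0 (w2 x0)); auto.
    - intros; apply Hmax; unfold Icc; lra.
    - intros; apply Hs; auto.
    - assert (0 < w x0) by (apply Hpos; auto).
      assert (M * (A - w x0) * w x0 < 0).
      { assert (0 < M * (w x0 - A) * w x0) by (apply Rmult_lt_0_compat; [apply Rmult_lt_0_compat|]; lra). nra. }
      lra. }
  destruct (ext_min a b w (Rlt_le _ _ Hab) Hcw) as [x0 [Hx0 Hmin]].
  intros x Hx. split; [|apply Hup; auto].
  eapply Rle_trans; [|apply Hmin; auto].
  destruct (Rle_dec (nu * A) (w x0)) as [|Hlt]; auto. exfalso.
  assert (Hint : a < x0 < b).
  { unfold Icc in Hx0. split; apply Rnot_le_lt; intro;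
    [assert (x0 = a) by lra|assert (x0 = b) by lra]; subst; lra. }
  destruct (Hs x0 Hint) as [_ [Hd2 Heq]].
  apply (min_test a b w w1 x0 (w2 x0)); auto.
  - intros; apply Hmin; unfold Icc; lra.
  - intros; apply Hs; auto.
  - assert (0 < w x0) by (apply Hpos; auto).
    assert (0 < M * (A - w x0) * w x0) by (apply Rmult_lt_0_compat; [apply Rmult_lt_0_compat|]; nra).
    lra.
Qed.

Lemma uniq_half a b A M w w1 w2 v v1 v2 : a < b -> 0 < A -> 0 < M ->
  soldata a b A M w w1 w2 -> soldata a b A M v v1 v2 -> w a = v a -> w b = v b ->
  (forall x, Icc a b x -> A / 2 <= w x <= A) -> (forall x, Icc a b x -> A / 2 <= v x <= A) ->
  forall x, Icc a b x -> w x <= v x.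
Proof.
  intros Hab HA HM [Hw [Hcw Hcw1]] [Hv [Hcv Hcv1]] Ha Hb Bw Bv.
  destruct (ext_max a b (fun x => w x - v x) (Rlt_le _ _ Hab) (cont_on_minus _ _ _ Hcw Hcv))
    as [x0 [Hx0 Hmax]].
  intros x Hx. pose proof (Hmax x Hx) as Hmx. simpl in Hmx.
  destruct (Rle_dec (w x0 - v x0) 0) as [|Hgt]; [lra|]. exfalso.
  assert (Hint : a < x0 < b).
  { unfold Icc in Hx0. split; apply Rnot_le_lt; intro;
    [assert (x0 = a) by lra|assert (x0 = b) by lra]; subst; lra. }
  destruct (Hw x0 Hint) as [_ [Hdw Heqw]]. destruct (Hv x0 Hint) as [_ [Hdv Heqv]].
  apply (max_test a b (fun x => w x - v x) (fun x => w1 x - v1 x) x0 (w2 x0 - v2 x0)); auto.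
  - intros y Hy. apply (Hmax y). unfold Icc; lra.
  - intros y Hy. apply is_derive_Rminus; [apply Hw|apply Hv]; auto.
  - apply is_derive_Rminus; auto.
  - pose proof (Bw x0 Hx0); pose proof (Bv x0 Hx0).
    assert (E : w2 x0 - v2 x0 = M * (w x0 - v x0) * (w x0 + v x0 - A)) by nra.
    rewrite E. apply Rmult_lt_0_compat; [apply Rmult_lt_0_compat|]; lra.
Qed.

Lemma uniq_sol a b A M w w1 w2 v v1 v2 : a < b -> 0 < A -> 0 < M ->
  soldata a b A M w w1 w2 -> soldata a b A M v v1 v2 -> w a = v a -> w b = v b ->
  (forall x, Icc a b x -> A / 2 <= w x <= A) -> (forall x, Icc a b x -> A / 2 <= v x <= A) ->
  forall x, Icc a b x -> w x = v x.
Proof.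
  intros. apply Rle_antisym.
  apply (uniq_half a b A M w w1 w2 v v1 v2); auto.
  apply (uniq_half a b A M v v1 v2 w w1 w2); auto.
Qed.

Lemma mono_sol a b A M nu1 nu2 w w1 w2 v v1 v2 : a < b -> 0 < A -> 0 < M -> nu1 < nu2 ->
  soldata a b A M w w1 w2 -> soldata a b A M v v1 v2 ->
  w a = nu1 * A -> w b = nu1 * A -> v a = nu2 * A -> v b = nu2 * A ->
  (forall x, Icc a b x -> A / 2 <= w x <= A) -> (forall x, Icc a b x -> A / 2 <= v x <= A) ->
  v1 a < w1 a.
Proof.
  intros Hab HA HM Hnu [Hw [Hcw Hcw1]] [Hv [Hcv Hcv1]] Hwa Hwb Hva Hvb Bw Bv.
  set (d := fun x => v x - w x). set (d1 := fun x => v1 x - w1 x).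
  set (d2 := fun x => v2 x - w2 x).
  assert (Hcd : cont_on (Icc a b) d) by (apply cont_on_minus; auto).
  assert (Hcd1 : cont_on (Icc a b) d1) by (apply cont_on_minus; auto).
  assert (Hdd : forall x, a < x < b -> is_derive d x (d1 x)).
  { intros x Hx; apply is_derive_Rminus; [apply Hv|apply Hw]; auto. }
  assert (Hdd1 : forall x, a < x < b -> is_derive d1 x (d2 x)).
  { intros x Hx; apply is_derive_Rminus; [apply Hv|apply Hw]; auto. }
  assert (Ed2 : forall x, a < x < b -> d2 x = M * d x * (v x + w x - A)).
  { intros x Hx. destruct (Hv x Hx) as [_ [_ E1]]. destruct (Hw x Hx) as [_ [_ E2]].
    unfold d2, d. nra. }
  assert (Hda : d a = (nu2 - nu1) * A) by (unfold d; rewrite Hva, Hwa; ring).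
  assert (Hdb : d b = (nu2 - nu1) * A) by (unfold d; rewrite Hvb, Hwb; ring).
  assert (Hdpos : 0 < (nu2 - nu1) * A) by (apply Rmult_lt_0_compat; lra).
  assert (Hge : forall x, Icc a b x -> 0 <= d x).
  { destruct (ext_min a b d (Rlt_le _ _ Hab) Hcd) as [x0 [Hx0 Hmin]].
    intros x Hx. eapply Rle_trans; [|apply Hmin; auto].
    destruct (Rle_dec 0 (d x0)) as [|Hlt]; auto. exfalso.
    assert (Hint : a < x0 < b).
    { unfold Icc in Hx0. split; apply Rnot_le_lt; intro;
      [assert (x0 = a) by lra|assert (x0 = b) by lra]; subst; lra. }
    apply (min_test a b d d1 x0 (d2 x0) Hint).
    - intros; apply Hmin; unfold Icc; lra.
    - exact Hdd.
    - apply Hdd1; auto.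
    - rewrite Ed2 by auto. pose proof (Bw x0 Hx0); pose proof (Bv x0 Hx0).
      unfold d in *.
      assert (0 < M * (w x0 - v x0) * (v x0 + w x0 - A)) by
        (apply Rmult_lt_0_compat; [apply Rmult_lt_0_compat|]; lra).
      nra. }
  assert (Hd2ge : forall x, a < x < b -> 0 <= d2 x).
  { intros x Hx. rewrite Ed2 by auto.
    assert (Icc a b x) by (unfold Icc; lra).
    pose proof (Bw x H); pose proof (Bv x H); pose proof (Hge x H).
    apply Rmult_le_pos; [apply Rmult_le_pos|]; lra. }
  apply Rnot_le_lt. intro Hcon.
  assert (Hd1a : 0 <= d1 a) by (unfold d1; lra).
  assert (Hd1ge : forall x, a < x < b -> 0 <= d1 x).
  { intros x Hx.
    destruct (MVT_open a x d1 d2 ltac:(lra) ltac:(apply (cont_on_sub a b); auto; lra) ltac:(intros; apply Hdd1; lra)) as [c [Hc Heq]].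
    assert (0 <= d2 c * (x - a)) by (apply Rmult_le_pos; [apply Hd2ge|]; lra). lra. }
  assert (Hdgt : forall x, a < x < b -> 0 < d x).
  { intros x Hx.
    destruct (MVT_open a x d d1 ltac:(lra) ltac:(apply (cont_on_sub a b); auto; lra) ltac:(intros; apply Hdd; lra)) as [c [Hc Heq]].
    assert (0 <= d1 c * (x - a)) by (apply Rmult_le_pos; [apply Hd1ge|]; lra). lra. }
  assert (Hd2gt : forall x, a < x < b -> 0 < d2 x).
  { intros x Hx. rewrite Ed2 by auto.
    assert (Icc a b x) by (unfold Icc; lra).
    pose proof (Bw x H); pose proof (Bv x H); pose proof (Hdgt x Hx).
    unfold d in *.
    apply Rmult_lt_0_compat; [apply Rmult_lt_0_compat|]; lra. }
  assert (Hd1gt : forall x, a < x < b -> 0 < d1 x).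
  { intros x Hx.
    destruct (MVT_open a x d1 d2 ltac:(lra) ltac:(apply (cont_on_sub a b); auto; lra) ltac:(intros; apply Hdd1; lra)) as [c [Hc Heq]].
    assert (0 < d2 c * (x - a)) by (apply Rmult_lt_0_compat; [apply Hd2gt|]; lra). lra. }
  destruct (MVT_open a b d d1) as [c [Hc Heq]]; auto.
  assert (0 < d1 c * (b - a)) by (apply Rmult_lt_0_compat; [apply Hd1gt|]; lra).
  lra.
Qed.


Definition g m t := m - m*m - t*t/2 + m*t*t - t*t*t*t/3.
Definition r m t := sqrt (g m t / 2).
Definition k m t := / r m t.
Definition X m t := RInt (k m) 0 t.
Definition F u := u*u/2 - u*u*u/3.

Lemma g_F m t : t * t * g m t = F m - F (m - t*t).
Proof. unfold g, F; field. Qed.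

Lemma g_even m t : g m (- t) = g m t.
Proof. unfold g; field. Qed.
Lemma r_even m t : r m (- t) = r m t.
Proof. unfold r; rewrite g_even; auto. Qed.
Lemma k_even m t : k m (- t) = k m t.
Proof. unfold k; rewrite r_even; auto. Qed.

Lemma g_lb m t : 1/2 < m < 1 -> t * t <= 3*m - 3/2 -> m * (1 - m) <= g m t.
Proof. intros. unfold g. nra. Qed.

Lemma g_pos m t : 1/2 < m < 1 -> t * t <= 3*m - 3/2 -> 0 < g m t.
Proof. intros. pose proof (g_lb m t H H0). nra. Qed.

Lemma r_pos m t : 1/2 < m < 1 -> t * t <= 3*m - 3/2 -> 0 < r m t.
Proof. intros. unfold r. apply sqrt_lt_R0. pose proof (g_pos m t H H0). lra. Qed.

Lemma sq_open t C : t * t < C -> exists eps, 0 < eps /\ forall s, Rabs (s - t) < eps -> s * s < C.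
Proof.
  intros H. exists (Rmin 1 ((C - t*t) / (2 * Rabs t + 2))).
  pose proof (Rabs_pos t).
  assert (Hp : 0 < (C - t*t) / (2 * Rabs t + 2)) by (apply Rdiv_lt_0_compat; lra).
  split. unfold Rmin; destruct Rle_dec; lra.
  intros s Hs.
  assert (H1 : Rabs (s - t) < 1) by (eapply Rlt_le_trans; [exact Hs|apply Rmin_l]).
  assert (H2 : Rabs (s - t) < (C - t*t) / (2 * Rabs t + 2)) by (eapply Rlt_le_trans; [exact Hs|apply Rmin_r]).
  assert (H3 : Rabs (s - t) * (2 * Rabs t + 2) < C - t * t).
  { apply Rmult_lt_reg_r with (/ (2 * Rabs t + 2)). apply Rinv_0_lt_compat; lra.
    replace (Rabs (s - t) * (2 * Rabs t + 2) * / (2 * Rabs t + 2)) with (Rabs (s - t)) by (field; lra).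
    exact H2. }
  set (h := s - t) in *. replace s with (t + h) by (unfold h; ring).
  assert (Hth : Rabs (t * h) = Rabs t * Rabs h) by apply Rabs_mult.
  assert (Hhh : h * h = Rabs h * Rabs h) by (rewrite <- Rabs_mult; rewrite Rabs_right; [auto|nra]).
  assert (t * h <= Rabs t * Rabs h) by (rewrite <- Hth; apply Rle_abs).
  pose proof (Rabs_pos h). nra.
Qed.

Definition good m z := z * z < 3 * m - 3/2.

Lemma k_cont m z : 1/2 < m < 1 -> good m z -> continuous (k m) z.
Proof.
  intros Hm Hz. unfold good in Hz.
  pose proof (g_pos m z Hm ltac:(lra)) as Hg.
  apply (ex_derive_continuous (k m) z). unfold k, r, g in *. auto_derive.
  repeat split; try lra. apply Rgt_not_eq, sqrt_lt_R0; lra.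
Qed.

Lemma good_between m s z : 1/2 < m < 1 -> good m s -> Rmin 0 s <= z <= Rmax 0 s -> good m z.
Proof.
  unfold good, Rmin, Rmax; intros; destruct Rle_dec; nra.
Qed.

Lemma X_ex m s : 1/2 < m < 1 -> good m s -> ex_RInt (k m) 0 s.
Proof.
  intros. apply (@ex_RInt_continuous R_CompleteNormedModule). intros z Hz. apply k_cont; auto.
  apply (good_between m s); auto.
Qed.

Lemma X_deriv m t : 1/2 < m < 1 -> good m t -> is_derive (X m) t (k m t).
Proof.
  intros Hm Ht. unfold X. apply (@is_derive_RInt R_CompleteNormedModule (k m) (RInt (k m) 0) 0 t).
  - destruct (sq_open t (3*m - 3/2) Ht) as [eps [He H]].
    exists (mkposreal eps He). intros s Hs. apply RInt_correct. apply X_ex; auto.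
    apply H. exact Hs.
  - apply k_cont; auto.
Qed.

Lemma X_0 m : X m 0 = 0.
Proof. unfold X. rewrite RInt_point. reflexivity. Qed.

Lemma X_odd m t : 1/2 < m < 1 -> good m t -> X m (- t) = - X m t.
Proof.
  intros Hm Ht. unfold X.
  assert (Hex : ex_RInt (k m) (-1 * 0 + 0) (-1 * t + 0)).
  { replace (-1 * 0 + 0) with 0 by ring. replace (-1*t+0) with (-t) by ring.
    apply X_ex; auto. unfold good in *; nra. }
  pose proof (RInt_comp_lin (k m) (-1) 0 0 t Hex) as E.
  replace (-1 * 0 + 0) with 0 in E by ring. replace (-1*t+0) with (-t) in E by ring.
  rewrite <- E.
  rewrite (RInt_ext _ (fun y => opp (k m y))).
  2:{ intros x _. unfold scal; simpl; unfold mult; simpl. replace (-1 * x + 0) with (-x) by ring.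
      rewrite k_even. unfold opp; simpl. ring. }
  apply (@RInt_opp R_CompleteNormedModule (k m) 0 t (X_ex m t Hm Ht)).
Qed.


Lemma incr_deriv p q f df : (forall t, p <= t <= q -> is_derive f t (df t) /\ 0 < df t) ->
  forall x y, p <= x -> x < y -> y <= q -> f x < f y.
Proof.
  intros H x y Hx Hxy Hy.
  destruct (MVT_open x y f df Hxy) as [c [Hc E]].
  - intros z Hz. apply (is_derive_cont_within _ f z (df z)). apply H. unfold Icc in Hz; lra.
  - intros z Hz. apply H. lra.
  - assert (0 < df c * (y - x)) by (apply Rmult_lt_0_compat; [apply H|]; lra). lra.
Qed.

Lemma inv_fun f df p q : p < q -> (forall t, p <= t <= q -> is_derive f t (df t) /\ 0 < df t) ->
  exists G : R -> R,
    (forall y, f p <= y <= f q -> p <= G y <= q /\ f (G y) = y) /\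
    (forall t, p <= t <= q -> G (f t) = t) /\
    (forall y, f p < y < f q -> is_derive G y (/ df (G y))).
Proof.
  intros Hpq Hd.
  pose proof (incr_deriv p q f df Hd) as Hinc.
  assert (Hcont : forall a, p <= a <= q -> continuity_pt f a).
  { intros a Ha. apply (is_derive_cont_pt f a (df a)), Hd; auto. }
  assert (Hex : forall y, f p <= y <= f q -> exists t, p <= t <= q /\ f t = y).
  { intros y Hy. destruct (IVT_rel p q f y (Rlt_le _ _ Hpq)) as [t [Ht E]].
    - intros z Hz. apply cont_pt_within, Hcont. unfold Icc in Hz; lra.
    - assert (f p < f q) by (apply Hinc; lra).
      rewrite Rmin_left, Rmax_right; lra.
    - exists t; split; auto. }
  set (G := fun y => epsilon (inhabits 0) (fun t => p <= t <= q /\ f t = y)).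
  assert (HG : forall y, f p <= y <= f q -> p <= G y <= q /\ f (G y) = y).
  { intros y Hy. unfold G. apply (epsilon_spec (inhabits 0) (fun t => p <= t <= q /\ f t = y)).
    apply Hex; auto. }
  assert (Huniq : forall s t, p <= s <= q -> p <= t <= q -> f s = f t -> s = t).
  { intros s t Hs Ht E. destruct (Rtotal_order s t) as [H|[H|H]]; auto.
    - assert (f s < f t) by (apply Hinc; lra); lra.
    - assert (f t < f s) by (apply Hinc; lra); lra. }
  assert (HGf : forall t, p <= t <= q -> G (f t) = t).
  { intros t Ht. assert (Hft : f p <= f t <= f q).
    { split.
      - destruct (Req_dec p t) as [E|E]; [rewrite E; lra| apply Rlt_le, Hinc; lra].
      - destruct (Req_dec t q) as [E|E]; [rewrite E; lra| apply Rlt_le, Hinc; lra]. }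
    destruct (HG (f t) Hft). apply Huniq; auto. }
  exists G. split; auto. split; auto.
  intros y Hy.
  assert (Hfpq : f p < f q) by (apply Hinc; lra).
  assert (Hcomp : forall x, f p <= x <= f q -> comp f G x = id x).
  { intros x Hx. unfold comp, id. apply HG; auto. }
  assert (Prg : continuity_pt G y).
  { apply (continuity_pt_recip_interv f G p q Hpq).
    - intros; apply Hinc; lra.
    - intros; apply Hcomp; lra.
    - intros; apply HG; lra.
    - auto.
    - auto. }
  assert (EGp : G (f p) = p) by (apply HGf; lra).
  assert (EGq : G (f q) = q) by (apply HGf; lra).
  assert (Prf : forall a, G (f p) <= a <= G (f q) -> derivable_pt f a).
  { intros a Ha. rewrite EGp, EGq in Ha. exists (df a). apply is_derive_Reals, Hd; auto. }
  assert (Prg_incr : G (f p) <= G y <= G (f q)).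
  { rewrite EGp, EGq. apply HG; lra. }
  assert (HGy : p <= G y <= q) by (apply HG; lra).
  assert (Edf : derive_pt f (G y) (Prf (G y) Prg_incr) = df (G y)).
  { apply derive_pt_eq_0. apply is_derive_Reals, Hd; auto. }
  assert (Hne : derive_pt f (G y) (Prf (G y) Prg_incr) <> 0).
  { rewrite Edf. apply Rgt_not_eq, Hd; auto. }
  pose proof (derivable_pt_lim_recip_interv f G (f p) (f q) y Prf Prg Hfpq Hy Prg_incr Hcomp Hne) as R.
  rewrite Edf in R. apply is_derive_Reals. replace (/ df (G y)) with (1 / df (G y)) by (field; apply Rgt_not_eq, Hd; auto).
  exact R.
Qed.


Lemma chain (h G : R -> R) x dh dG : is_derive h (G x) dh -> is_derive G x dG ->
  is_derive (fun x => h (G x)) x (dh * dG).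
Proof.
  intros H1 H2. pose proof (is_derive_comp h G x dh dG H1 H2) as H.
  unfold scal in H; simpl in H; unfold mult in H; simpl in H. rewrite Rmult_comm. exact H.
Qed.

Lemma is_derive_eqv (f : R -> R) x l l' : is_derive f x l -> l = l' -> is_derive f x l'.
Proof. intros H E; subst; auto. Qed.

Lemma d_sq m t : is_derive (fun t => m - t * t) t (- 2 * t).
Proof. auto_derive; auto. ring. Qed.

Lemma d_u1 m t : 0 < g m t ->
  is_derive (fun t => -2*t * r m t) t (((m - t*t)*(m-t*t) - (m - t*t)) / r m t).
Proof.
intros Hg. unfold r. 
assert (Hq: 0 < sqrt (g m t / 2)) by (apply sqrt_lt_R0; lra).
assert (Hqq: sqrt (g m t / 2) * sqrt (g m t / 2) = g m t / 2) by (apply sqrt_sqrt; lra).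
revert Hq Hqq. set (q := sqrt (g m t / 2)). intros Hq Hqq.
unfold g in *. auto_derive.
- lra.
- change (sqrt ((m - m * m + - (t * t * / 2) + m * t * t + - (t * t * t * t * / 3)) * / 2)) with q.
  apply (Rmult_eq_reg_r q); [|lra]. field_simplify.
  replace (q^2) with (q*q) by ring. rewrite Hqq. field. lra. lra.
Qed.

Definition Tm nu m := X m (sqrt (m - nu)).
Definition phi0 nu m := 2 * sqrt (m - nu) * r m (sqrt (m - nu)).

Lemma good_c m t : 1/2 < m < 1 -> - sqrt (2*m-1) <= t <= sqrt (2*m-1) -> good m t.
Proof.
  intros Hm Ht. unfold good.
  assert (Hc : sqrt (2*m-1) * sqrt (2*m-1) = 2*m-1) by (apply sqrt_sqrt; lra).
  pose proof (sqrt_pos (2*m-1)). nra.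
Qed.

Lemma construct nu m : 1/2 <= nu < m -> m < 1 ->
  0 < Tm nu m /\
  exists (u u1 u2 : R -> R) (Om : R), Tm nu m < Om /\
   (forall x, - Om < x < Om -> is_derive u x (u1 x) /\ is_derive u1 x (u2 x) /\
        u2 x = u x * u x - u x) /\
   u (- Tm nu m) = nu /\ u (Tm nu m) = nu /\ u 0 = m /\ u1 (- Tm nu m) = phi0 nu m /\
   (forall x, - Tm nu m <= x <= Tm nu m -> nu <= u x <= m) /\
   (forall x, - Tm nu m < x < Tm nu m -> nu < u x).
Proof.
  intros Hnu Hm1.
  assert (Hm : 1/2 < m < 1) by lra.
  set (c := sqrt (2*m-1)).
  assert (Hc2 : c * c = 2*m-1) by (apply sqrt_sqrt; lra).
  assert (Hc : 0 < c) by (apply sqrt_lt_R0; lra).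
  set (a := sqrt (m - nu)).
  assert (Ha2 : a * a = m - nu) by (apply sqrt_sqrt; lra).
  assert (Ha : 0 < a) by (apply sqrt_lt_R0; lra).
  assert (Hac : a < c) by nra.
  assert (Hd : forall t, -c <= t <= c -> is_derive (X m) t (k m t) /\ 0 < k m t).
  { intros t Ht. assert (good m t) by (apply good_c; auto).
    split. apply X_deriv; auto. unfold k. apply Rinv_0_lt_compat, r_pos; auto.
    unfold good in *; lra. }
  pose proof (incr_deriv (-c) c (X m) (k m) Hd) as Hinc.
  destruct (inv_fun (X m) (k m) (-c) c ltac:(lra) Hd) as [tau [Ht1 [Ht2 Ht3]]].
  assert (Egc : good m c) by (apply good_c; [auto|fold c; lra]).
  assert (Ega : good m a) by (apply good_c; [auto|fold c; lra]).
  assert (EXc : X m (- c) = - X m c) by (apply X_odd; auto).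
  assert (EXa : X m (- a) = - X m a) by (apply X_odd; auto).
  assert (HL : 0 < X m a) by (rewrite <- (X_0 m); apply Hinc; lra).
  assert (HLO : X m a < X m c) by (apply Hinc; lra).
  unfold Tm; fold a. split; auto.
  set (u := fun x => m - tau x * tau x).
  set (u1 := fun x => -2 * tau x * r m (tau x)).
  set (u2 := fun x => u x * u x - u x).
  exists u, u1, u2, (X m c). split; auto.
  assert (Htau_a : tau (X m a) = a) by (apply Ht2; lra).
  assert (Htau_ma : tau (- X m a) = - a) by (rewrite <- EXa; apply Ht2; lra).
  assert (Htau_0 : tau 0 = 0) by (pose proof (Ht2 0 ltac:(lra)) as E; rewrite X_0 in E; exact E).
  assert (Hrange : forall x, - X m c <= x <= X m c -> -c <= tau x <= c /\ X m (tau x) = x).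
  { intros x Hx. apply Ht1. rewrite EXc; auto. }
  split.
  { intros x Hx.
    assert (Hx' : X m (-c) < x < X m c) by (rewrite EXc; auto).
    destruct (Hrange x ltac:(lra)) as [Hr _].
    assert (Hg : good m (tau x)) by (apply good_c; auto).
    assert (Hgp : 0 < g m (tau x)) by (apply g_pos; auto; unfold good in Hg; lra).
    assert (Hrp : 0 < r m (tau x)) by (apply r_pos; auto; unfold good in Hg; lra).
    pose proof (Ht3 x Hx') as Hdt. unfold k in Hdt. rewrite Rinv_inv in Hdt.
    split; [|split].
    - unfold u, u1. 
      pose proof (chain (fun t => m - t * t) tau x _ _ (d_sq m (tau x)) Hdt) as H.
      replace (-2 * tau x * r m (tau x)) with (- 2 * tau x * r m (tau x)) by ring. exact H.
    - unfold u1, u2, u.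
      pose proof (chain (fun t => -2 * t * r m t) tau x _ _ (d_u1 m (tau x) Hgp) Hdt) as H.
      eapply is_derive_eqv; [exact H|]. unfold Rdiv; rewrite Rmult_assoc, Rinv_l, Rmult_1_r; [reflexivity| lra].
    - reflexivity. }
  split; [|split; [|split; [|split; [|split]]]].
  - unfold u. rewrite Htau_ma. lra.
  - unfold u. rewrite Htau_a. lra.
  - unfold u. rewrite Htau_0. ring.
  - unfold u1, phi0. fold a. rewrite Htau_ma, r_even. ring.
  - intros x Hx. destruct (Hrange x ltac:(lra)) as [Hr Hx2].
    assert (Hta : -a <= tau x <= a).
    { split; apply Rnot_lt_le; intro Hlt.
      - assert (X m (tau x) < X m (-a)) by (apply Hinc; lra). lra.
      - assert (X m a < X m (tau x)) by (apply Hinc; lra). lra. }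
    unfold u. split; nra.
  - intros x Hx. destruct (Hrange x ltac:(lra)) as [Hr Hx2].
    assert (Hta : -a < tau x < a).
    { split; apply Rnot_le_lt; intro Hlt.
      - destruct (Req_dec (tau x) (-a)) as [E|E].
        + rewrite E, EXa in Hx2. lra.
        + assert (X m (tau x) < X m (-a)) by (apply Hinc; lra). lra.
      - destruct (Req_dec (tau x) a) as [E|E].
        + rewrite E in Hx2. lra.
        + assert (X m a < X m (tau x)) by (apply Hinc; lra). lra. }
    unfold u. nra.
Qed.


Lemma ex_RInt_k m s1 s2 : 1/2 < m < 1 -> good m s1 -> good m s2 -> ex_RInt (k m) s1 s2.
Proof.
  intros Hm H1 H2. apply (@ex_RInt_continuous R_CompleteNormedModule). intros z Hz.
  apply k_cont; auto. unfold good, Rmin, Rmax in *. destruct (Rle_dec s1 s2); destruct (Rle_dec 0 z); nra.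
Qed.

Lemma g_ub m t : 0 <= m <= 1 -> 0 <= t * t <= 1/2 -> g m t <= 1/2.
Proof. intros. unfold g. nra. Qed.

Lemma g_ub2 m t : 1/2 <= m <= 1 -> g m t <= (1 - m) + t * t.
Proof. intros. unfold g. nra. Qed.

Lemma sqrt_le_half x : x <= 1/4 -> sqrt x <= 1/2.
Proof.
  intros. rewrite <- (sqrt_square (1/2)) by lra. destruct (Rle_dec 0 x).
  apply sqrt_le_1; lra. rewrite sqrt_neg_0 by lra. apply sqrt_pos.
Qed.

Section Bounds.
Variables nu m : R.
Hypothesis Hnu : 1/2 <= nu < m.
Hypothesis Hm1 : m < 1.

Let a := sqrt (m - nu).
Lemma a_sq : a * a = m - nu.
Proof. apply sqrt_sqrt; lra. Qed.
Lemma a_pos : 0 < a.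
Proof. apply sqrt_lt_R0; lra. Qed.

Lemma good_range t : 0 <= t <= a -> good m t /\ t * t <= 3 * m - 3/2.
Proof. intros Ht. pose proof a_sq. pose proof a_pos. unfold good. split; nra. Qed.

Lemma k_ge2 t : 0 <= t <= a -> 2 <= k m t.
Proof.
  intros Ht. destruct (good_range t Ht) as [_ Hg]. pose proof a_sq.
  assert (Hm : 1/2 < m < 1) by lra.
  pose proof (r_pos m t Hm Hg).
  assert (r m t <= 1/2).
  { unfold r. apply sqrt_le_half. assert (g m t <= 1/2) by (apply g_ub; nra). lra. }
  unfold k. apply (Rmult_le_reg_r (r m t)); auto.
  rewrite Rinv_l by lra. lra.
Qed.

Lemma k_le t : 0 <= t <= a -> k m t <= / sqrt (m * (1 - m) / 2).
Proof.
  intros Ht. destruct (good_range t Ht) as [_ Hg].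
  assert (Hm : 1/2 < m < 1) by lra.
  pose proof (g_lb m t Hm Hg).
  assert (0 < sqrt (m * (1 - m) / 2)) by (apply sqrt_lt_R0; nra).
  unfold k, r. apply Rinv_le_contravar; auto. apply sqrt_le_1_alt. lra.
Qed.

Lemma Tm_ge : 2 * a <= Tm nu m.
Proof.
  unfold Tm; fold a. unfold X. pose proof a_pos.
  assert (Hm : 1/2 < m < 1) by lra.
  assert (Hex : ex_RInt (k m) 0 a) by (apply X_ex; auto; apply good_range; lra).
  pose proof (RInt_le (fun _ => 2) (k m) 0 a ltac:(lra) (ex_RInt_const _ _ _) Hex) as HH.
  rewrite RInt_const in HH. unfold scal in HH; simpl in HH; unfold mult in HH; simpl in HH.
  assert (2 * a <= RInt (k m) 0 a) as R0; [|exact R0].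
  replace (2 * a) with ((a - 0) * 2) by ring. apply HH.
  intros x Hx. apply k_ge2; lra.
Qed.

Lemma Tm_le : Tm nu m <= a * / sqrt (m * (1 - m) / 2).
Proof.
  unfold Tm; fold a. unfold X. pose proof a_pos.
  assert (Hm : 1/2 < m < 1) by lra.
  assert (Hex : ex_RInt (k m) 0 a) by (apply X_ex; auto; apply good_range; lra).
  pose proof (abs_RInt_le_const (k m) 0 a (/ sqrt (m * (1 - m) / 2)) ltac:(lra) Hex) as HH.
  replace (a - 0) with a in HH by ring.
  eapply Rle_trans; [apply Rle_abs|]. apply HH.
  intros t Ht. pose proof (k_ge2 t Ht). rewrite Rabs_right by lra. apply k_le; auto.
Qed.

Lemma phi0_sq : phi0 nu m * phi0 nu m = 2 * (F m - F nu).
Proof.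
  unfold phi0; fold a. pose proof a_sq. pose proof a_pos.
  assert (Hm : 1/2 < m < 1) by lra.
  destruct (good_range a ltac:(lra)) as [_ Hg].
  pose proof (g_pos m a Hm Hg).
  assert (Hr : r m a * r m a = g m a / 2) by (unfold r; apply sqrt_sqrt; lra).
  replace (2 * a * r m a * (2 * a * r m a)) with (4 * (a * a) * (r m a * r m a)) by ring.
  rewrite Hr. pose proof (g_F m a). replace nu with (m - a * a) by lra. lra.
Qed.

Lemma phi0_pos : 0 < phi0 nu m.
Proof.
  unfold phi0; fold a. pose proof a_pos.
  destruct (good_range a ltac:(lra)) as [_ Hg].
  pose proof (r_pos m a ltac:(lra) Hg). apply Rmult_lt_0_compat; lra.
Qed.

Lemma phi0_le : phi0 nu m <= a.
Proof.
  unfold phi0; fold a. pose proof a_pos. pose proof a_sq.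
  destruct (good_range a ltac:(lra)) as [_ Hg].
  assert (r m a <= 1/2).
  { unfold r. apply sqrt_le_half. assert (g m a <= 1/2) by (apply g_ub; nra). lra. }
  nra.
Qed.

End Bounds.


Lemma sqrt_diff x y : 0 <= x -> 0 <= y -> Rabs (sqrt x - sqrt y) <= sqrt (Rabs (x - y)).
Proof.
  intros Hx Hy.
  assert (Hgen : forall x y, 0 <= y <= x -> Rabs (sqrt x - sqrt y) <= sqrt (Rabs (x - y))).
  { clear. intros x y [Hy Hxy].
    assert (Hs : sqrt y <= sqrt x) by (apply sqrt_le_1_alt; lra).
    pose proof (sqrt_pos y). pose proof (sqrt_pos x).
    pose proof (sqrt_sqrt x ltac:(lra)). pose proof (sqrt_sqrt y ltac:(lra)).
    rewrite Rabs_right by lra. rewrite Rabs_right by lra.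
    rewrite <- (sqrt_square (sqrt x - sqrt y)) by lra.
    apply sqrt_le_1_alt. nra. }
  destruct (Rle_dec y x). apply Hgen; lra.
  rewrite Rabs_minus_sym, (Rabs_minus_sym x). apply Hgen; lra.
Qed.

Lemma Rabs_RInt_le f a b M : ex_RInt f a b ->
  (forall x, Rmin a b <= x <= Rmax a b -> Rabs (f x) <= M) ->
  Rabs (RInt f a b) <= Rabs (b - a) * M.
Proof.
  intros Hex H. apply (@norm_RInt_le_const_abs R_NormedModule f a b); auto.
  apply (@RInt_correct R_CompleteNormedModule). exact Hex.
Qed.

Lemma RInt_diff f g a b : ex_RInt f a b -> ex_RInt g a b ->
  RInt f a b - RInt g a b = RInt (fun x => f x - g x) a b.
Proof.
  intros H1 H2. symmetry. apply (@RInt_minus R_CompleteNormedModule f g a b H1 H2).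
Qed.

Lemma RInt_chasles f a b c : ex_RInt f a b -> ex_RInt f b c ->
  RInt f a b + RInt f b c = RInt f a c.
Proof. intros H1 H2. apply (@RInt_Chasles R_CompleteNormedModule f a b c H1 H2). Qed.

Lemma Tm_cont_m nu m0 : 1/2 <= nu < m0 -> m0 < 1 ->
  forall eps, 0 < eps -> exists delta, 0 < delta /\ forall m, Rabs (m - m0) < delta ->
    nu < m < 1 /\ Rabs (Tm nu m - Tm nu m0) < eps.
Proof.
  intros Hnu Hm0 eps Heps.
  set (eta := Rmin ((m0 - nu)/2) (Rmin ((1 - m0)/2) ((2*m0 - 1)/8))).
  assert (Heta : 0 < eta /\ eta <= (m0 - nu)/2 /\ eta <= (1-m0)/2 /\ eta <= (2*m0-1)/8).
  { unfold eta, Rmin; repeat destruct Rle_dec; lra. }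
  set (c0 := (m0 - eta) * (1 - m0 - eta)).
  assert (Hc0 : 0 < c0) by (unfold c0; apply Rmult_lt_0_compat; lra).
  set (K := / sqrt (c0 / 2)).
  assert (Hsc : 0 < sqrt (c0 / 2)) by (apply sqrt_lt_R0; lra).
  assert (HK : 0 < K) by (apply Rinv_0_lt_compat; auto).
  set (C := K + 2 / c0).
  assert (HC : 0 < C) by (unfold C; assert (0 < 2 / c0) by (apply Rdiv_lt_0_compat; lra); lra).
  exists (Rmin eta ((eps / (C + 1)) * (eps / (C + 1)))).
  assert (He2 : 0 < (eps / (C + 1)) * (eps / (C + 1))).
  { assert (0 < eps / (C + 1)) by (apply Rdiv_lt_0_compat; lra). nra. }
  split. unfold Rmin; destruct Rle_dec; lra.
  intros m Hm.
  assert (Hm1 : Rabs (m - m0) < eta) by (eapply Rlt_le_trans; [exact Hm|apply Rmin_l]).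
  assert (Hm2 : Rabs (m - m0) < (eps / (C + 1)) * (eps / (C + 1))) by (eapply Rlt_le_trans; [exact Hm|apply Rmin_r]).
  assert (Hmr : m0 - eta < m < m0 + eta) by (unfold Rabs in Hm1; destruct Rcase_abs; lra).
  split; [lra|].
  set (reg := fun t => t * t <= m0 + eta - nu).
  assert (Hg : forall m', m0 - eta <= m' <= m0 + eta -> forall t, reg t ->
             c0 <= g m' t /\ good m' t).
  { intros m' Hm' t Ht. unfold reg in Ht.
    assert (Hm'' : 1/2 < m' < 1) by lra.
    assert (Ht3 : t * t < 3 * m' - 3/2) by lra.
    pose proof (g_lb m' t Hm'' (Rlt_le _ _ Ht3)).
    split; [|unfold good; lra].
    assert (c0 <= m' * (1 - m')); [|lra].
    unfold c0. apply Rmult_le_compat; lra. }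
  assert (Hk : forall m', m0 - eta <= m' <= m0 + eta -> forall t, reg t ->
             sqrt (c0 / 2) <= r m' t /\ 0 < k m' t <= K).
  { intros m' Hm' t Ht. destruct (Hg m' Hm' t Ht) as [Hg1 _].
    assert (sqrt (c0 / 2) <= r m' t) by (unfold r; apply sqrt_le_1_alt; lra).
    split; auto. unfold k, K. split. apply Rinv_0_lt_compat; lra.
    apply Rinv_le_contravar; auto. }
  assert (Hkd : forall t, reg t -> Rabs (k m t - k m0 t) <= 2 / c0 * sqrt (Rabs (m - m0))).
  { intros t Ht.
    destruct (Hk m ltac:(lra) t Ht) as [Hr1 _]. destruct (Hk m0 ltac:(lra) t Ht) as [Hr2 _].
    destruct (Hg m ltac:(lra) t Ht) as [Hg1 _]. destruct (Hg m0 ltac:(lra) t Ht) as [Hg2 _].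
    assert (Hrr : Rabs (r m t - r m0 t) <= sqrt (Rabs (m - m0))).
    { unfold r. eapply Rle_trans; [apply sqrt_diff; lra|]. apply sqrt_le_1_alt.
      unfold g. replace ((m - m * m - t * t / 2 + m * t * t - t * t * t * t / 3) / 2 -
        (m0 - m0 * m0 - t * t / 2 + m0 * t * t - t * t * t * t / 3) / 2) with
        ((m - m0) * ((1 - m - m0 + t * t) / 2)) by field.
      rewrite Rabs_mult. rewrite <- (Rmult_1_r (Rabs (m - m0))) at 2.
      apply Rmult_le_compat_l; [apply Rabs_pos|].
      unfold reg in Ht. apply Rabs_le; nra. }
    assert (Hcc : c0 / 2 <= r m t * r m0 t).
    { pose proof (sqrt_sqrt (c0/2) ltac:(lra)). pose proof (sqrt_pos (c0/2)). nra. }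
    unfold k. replace (/ r m t - / r m0 t) with ((r m0 t - r m t) / (r m t * r m0 t)) by (field; lra).
    rewrite Rabs_div by nra. rewrite (Rabs_right (r m t * r m0 t)) by nra.
    rewrite Rabs_minus_sym.
    apply (Rmult_le_reg_r (r m t * r m0 t)); [nra|].
    unfold Rdiv. rewrite Rmult_assoc, Rinv_l, Rmult_1_r by nra.
    pose proof (sqrt_pos (Rabs (m - m0))).
    apply Rle_trans with (2 / c0 * sqrt (Rabs (m - m0)) * (c0 / 2)).
    - replace (2 / c0 * sqrt (Rabs (m - m0)) * (c0 / 2)) with (sqrt (Rabs (m - m0))) by (field; lra). lra.
    - apply Rmult_le_compat_l; [|lra]. apply Rmult_le_pos; [|lra]. left; apply Rdiv_lt_0_compat; lra. }
  set (a := sqrt (m - nu)). set (a0 := sqrt (m0 - nu)).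
  assert (Ha : a * a = m - nu) by (apply sqrt_sqrt; lra).
  assert (Ha0 : a0 * a0 = m0 - nu) by (apply sqrt_sqrt; lra).
  pose proof (sqrt_pos (m - nu)) as Hap. pose proof (sqrt_pos (m0 - nu)) as Ha0p. fold a a0 in Hap, Ha0p.
  assert (Hreg : forall t, Rmin a a0 <= t <= Rmax a a0 \/ Rmin 0 a0 <= t <= Rmax 0 a0 -> reg t).
  { intros t Ht. unfold reg. unfold Rmin, Rmax in Ht. repeat destruct Rle_dec; nra. }
  assert (Hm' : 1/2 < m < 1) by lra. assert (Hm0' : 1/2 < m0 < 1) by lra.
  assert (Hgood : forall m', m0 - eta <= m' <= m0 + eta -> forall t, reg t -> good m' t).
  { intros; apply Hg; auto. }
  assert (Ex1 : ex_RInt (k m) 0 a0).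
  { apply ex_RInt_k; auto; apply Hgood; try lra; apply Hreg; right; unfold Rmin, Rmax; repeat destruct Rle_dec; lra. }
  assert (Ex2 : ex_RInt (k m) a0 a).
  { apply ex_RInt_k; auto; apply Hgood; try lra; apply Hreg; left; unfold Rmin, Rmax; repeat destruct Rle_dec; lra. }
  assert (Ex3 : ex_RInt (k m0) 0 a0).
  { apply ex_RInt_k; auto; apply Hgood; try lra; apply Hreg; right; unfold Rmin, Rmax; repeat destruct Rle_dec; lra. }
  unfold Tm, X. fold a a0.
  rewrite <- (RInt_chasles (k m) 0 a0 a Ex1 Ex2).
  replace (RInt (k m) 0 a0 + RInt (k m) a0 a - RInt (k m0) 0 a0) with
    (RInt (k m) a0 a + (RInt (k m) 0 a0 - RInt (k m0) 0 a0)) by ring.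
  rewrite (RInt_diff _ _ _ _ Ex1 Ex3).
  assert (B1 : Rabs (RInt (k m) a0 a) <= Rabs (a - a0) * K).
  { apply Rabs_RInt_le; auto. intros t Ht.
    assert (Hrt : reg t) by (apply Hreg; left; rewrite Rmin_comm, Rmax_comm; exact Ht).
    destruct (Hk m ltac:(lra) t Hrt) as [_ [H1 H2]].
    rewrite Rabs_right; lra. }
  assert (B2 : Rabs (RInt (fun x => k m x - k m0 x) 0 a0) <= Rabs (a0 - 0) * (2 / c0 * sqrt (Rabs (m - m0)))).
  { apply Rabs_RInt_le.
    - apply (@ex_RInt_minus R_NormedModule); auto.
    - intros t Ht. apply Hkd. apply Hreg. right. auto. }
  assert (B3 : Rabs (a - a0) <= sqrt (Rabs (m - m0))).
  { unfold a, a0. eapply Rle_trans; [apply sqrt_diff; lra|]. right. f_equal. f_equal. ring. }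
  assert (B4 : Rabs (a0 - 0) <= 1).
  { rewrite Rminus_0_r, Rabs_right by lra. nra. }
  set (s := sqrt (Rabs (m - m0))) in *.
  assert (Hs : 0 <= s) by apply sqrt_pos.
  assert (Hs2 : s < eps / (C + 1)).
  { unfold s. rewrite <- (sqrt_square (eps / (C + 1))).
    apply sqrt_lt_1_alt. split; [apply Rabs_pos|]. exact Hm2.
    left; apply Rdiv_lt_0_compat; lra. }
  assert (Hcs : (C + 1) * s < eps).
  { apply (Rmult_lt_reg_r (/ (C + 1))). apply Rinv_0_lt_compat; lra.
    replace ((C + 1) * s * / (C + 1)) with s by (field; lra). exact Hs2. }
  eapply Rle_lt_trans; [apply Rabs_triang|].
  assert (Rabs (a - a0) * K <= s * K) by (apply Rmult_le_compat_r; lra).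
  assert (Rabs (a0 - 0) * (2 / c0 * s) <= 1 * (2 / c0 * s)).
  { apply Rmult_le_compat_r; auto. apply Rmult_le_pos; auto. left; apply Rdiv_lt_0_compat; lra. }
  unfold C in Hcs. nra.
Qed.


Lemma cont_pt_eps f x : continuity_pt f x ->
  forall eps, 0 < eps -> exists delta, 0 < delta /\ forall y, Rabs (y - x) < delta -> Rabs (f y - f x) < eps.
Proof.
  intros H eps Heps. destruct (cont_pt_within (fun _ => True) f x H eps Heps) as [d [Hd H2]].
  exists d; split; auto.
Qed.

Lemma Tm_cont_on nu p q : 1/2 <= nu < p -> q < 1 -> cont_on (Icc p q) (Tm nu).
Proof.
  intros Hnu Hq x Hx eps Heps. unfold Icc in Hx.
  destruct (Tm_cont_m nu x ltac:(lra) ltac:(lra) eps Heps) as [d [Hd H]].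
  exists d; split; auto. intros y _ Hy. apply H; auto.
Qed.

Lemma Tm_cont_nu nu0 m : 1/2 <= nu0 < m -> m < 1 ->
  forall eps, 0 < eps -> exists delta, 0 < delta /\ forall nu, 1/2 <= nu < m ->
    Rabs (nu - nu0) < delta -> Rabs (Tm nu m - Tm nu0 m) < eps.
Proof.
  intros Hnu Hm eps Heps.
  assert (Hc : continuity_pt (fun nu => X m (sqrt (m - nu))) nu0).
  { apply (continuity_pt_comp (fun nu => sqrt (m - nu)) (X m)).
    - apply (continuity_pt_comp (fun nu => m - nu) sqrt).
      + apply continuity_pt_minus. apply continuity_pt_const. intros ? ?; auto.
        apply derivable_continuous_pt, derivable_pt_id.
      + apply continuity_pt_sqrt. lra.
    - apply (is_derive_cont_pt _ _ (k m (sqrt (m - nu0)))). apply X_deriv; [lra|].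
      unfold good. rewrite sqrt_sqrt by lra. lra. }
  destruct (cont_pt_eps _ _ Hc eps Heps) as [d [Hd H]].
  exists d; split; auto. intros nu Hnu' Hd'. apply H; auto.
Qed.

Lemma sol_of nu m : 1/2 <= nu < m -> m < 1 ->
  exists u u1 u2, soldata (- Tm nu m) (Tm nu m) 1 1 u u1 u2 /\
    u (- Tm nu m) = nu /\ u (Tm nu m) = nu /\ u 0 = m /\ u1 (- Tm nu m) = phi0 nu m /\
    (forall x, Icc (- Tm nu m) (Tm nu m) x -> nu <= u x <= m) /\
    (forall x, - Tm nu m < x < Tm nu m -> nu < u x) /\
    (forall x, Icc (- Tm nu m) (Tm nu m) x -> is_derive u x (u1 x) /\ is_derive u1 x (u2 x)) /\
    (forall x, Icc (- Tm nu m) (Tm nu m) x -> u2 x = u x * u x - u x).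
Proof.
  intros Hnu Hm. destruct (construct nu m Hnu Hm) as [HL [u [u1 [u2 [Om [HO [Hd [E1 [E2 [E3 [E4 [B1 B2]]]]]]]]]]]].
  exists u, u1, u2.
  assert (Hd' : forall x, Icc (- Tm nu m) (Tm nu m) x -> is_derive u x (u1 x) /\ is_derive u1 x (u2 x)).
  { intros x Hx. unfold Icc in Hx. destruct (Hd x ltac:(lra)) as [? [? ?]]; auto. }
  assert (Hd2 : forall x, Icc (- Tm nu m) (Tm nu m) x -> u2 x = u x * u x - u x).
  { intros x Hx. unfold Icc in Hx. destruct (Hd x ltac:(lra)) as [? [? ?]]; auto. }
  split; [| exact (conj E1 (conj E2 (conj E3 (conj E4 (conj B1 (conj B2 (conj Hd' Hd2)))))))].
  split; [|split].
  - intros x Hx. destruct (Hd x ltac:(lra)) as [D1 [D2 E]]. split; [exact D1|split; [exact D2|rewrite E; ring]].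
  - intros x Hx. apply (is_derive_cont_within _ u x (u1 x)). apply Hd'; auto.
  - intros x Hx. apply (is_derive_cont_within _ u1 x (u2 x)). apply Hd'; auto.
Qed.

Lemma Tm_inj nu m1 m2 : 1/2 <= nu < m1 -> m1 < 1 -> nu < m2 -> m2 < 1 ->
  Tm nu m1 = Tm nu m2 -> m1 = m2.
Proof.
  intros H1 H2 H3 H4 E.
  destruct (sol_of nu m1 H1 H2) as [u [u1 [u2 [S1 [Ua [Ub [U0 [_ [UB _]]]]]]]]].
  destruct (sol_of nu m2 ltac:(lra) H4) as [v [v1 [v2 [S2 [Va [Vb [V0 [_ [VB _]]]]]]]]].
  rewrite <- E in S2, Va, Vb, VB.
  pose proof (Tm_ge nu m1 H1 H2). pose proof (a_pos nu m1 H1).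
  assert (Hint : Icc (- Tm nu m1) (Tm nu m1) 0) by (unfold Icc; lra).
  pose proof (uniq_sol (- Tm nu m1) (Tm nu m1) 1 1 u u1 u2 v v1 v2 ltac:(lra) Rlt_0_1 Rlt_0_1 S1 S2
    ltac:(lra) ltac:(lra)) as HU.
  rewrite <- U0, <- V0. apply HU; auto.
  - intros x Hx. specialize (UB x Hx). lra.
  - intros x Hx. specialize (VB x Hx). lra.
Qed.


Lemma Tm_small nu mb y : 1/2 <= nu < mb -> mb <= 1 -> 0 < y ->
  exists m, nu < m < mb /\ m < 1 /\ Tm nu m < y.
Proof.
  intros Hnu Hmb Hy.
  set (q := sqrt ((1 - nu) / 8)).
  assert (Hq : 0 < q) by (apply sqrt_lt_R0; lra).
  assert (Hq2 : q * q = (1 - nu) / 8) by (apply sqrt_sqrt; lra).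
  set (e := Rmin ((mb - nu) / 2) (Rmin ((1 - nu) / 2) ((y * q) * (y * q) / 2))).
  assert (He : 0 < e /\ e <= (mb - nu)/2 /\ e <= (1-nu)/2 /\ e <= (y*q)*(y*q)/2).
  { assert (0 < (y * q) * (y * q) / 2) by (apply Rdiv_lt_0_compat; [apply Rmult_lt_0_compat; apply Rmult_lt_0_compat|]; lra).
    unfold e, Rmin; repeat destruct Rle_dec; lra. }
  exists (nu + e). split; [lra|split; [lra|]].
  pose proof (Tm_le nu (nu + e) ltac:(lra) ltac:(lra)) as H.
  replace (nu + e - nu) with e in H by ring.
  set (s := sqrt ((nu + e) * (1 - (nu + e)) / 2)) in H.
  assert (Hs : q <= s).
  { apply sqrt_le_1_alt. nra. }
  assert (Hse : sqrt e < y * q).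
  { rewrite <- (sqrt_square (y * q)) by (apply Rlt_le, Rmult_lt_0_compat; lra).
    apply sqrt_lt_1_alt. lra. }
  assert (sqrt e * / s <= sqrt e * / q).
  { apply Rmult_le_compat_l. apply sqrt_pos. apply Rinv_le_contravar; lra. }
  assert (sqrt e * / q < y).
  { apply (Rmult_lt_reg_r q); auto. rewrite Rmult_assoc, Rinv_l, Rmult_1_r by lra. exact Hse. }
  lra.
Qed.

Lemma Tm_incr nu m1 m2 : 1/2 <= nu < m1 -> m1 < m2 -> m2 < 1 -> Tm nu m1 < Tm nu m2.
Proof.
  intros H1 H12 H2.
  destruct (Rtotal_order (Tm nu m1) (Tm nu m2)) as [Hlt|[Heq|Hgt]]; auto.
  - apply Tm_inj in Heq; lra.
  - exfalso.
    assert (Hp : 0 < Tm nu m2).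
    { pose proof (Tm_ge nu m2 ltac:(lra) H2). pose proof (a_pos nu m2 ltac:(lra)). lra. }
    destruct (Tm_small nu m1 (Tm nu m2) H1 ltac:(lra) Hp) as [m' [Hm' [Hm'1 Hlt]]].
    destruct (IVT_rel m' m1 (Tm nu) (Tm nu m2) ltac:(lra)) as [m'' [Hm'' E]].
    + apply Tm_cont_on; lra.
    + rewrite Rmin_left, Rmax_right; lra.
    + unfold Icc in Hm''. apply Tm_inj in E; lra.
Qed.

Lemma Tm_unbounded nu : 1/2 <= nu < 1 -> forall L, exists m, nu < m < 1 /\ L < Tm nu m.
Proof.
  intros Hnu L.
  set (a0 := sqrt ((1 - nu) / 2)).
  assert (Ha0 : 0 < a0) by (apply sqrt_lt_R0; lra).
  assert (Ha02 : a0 * a0 = (1 - nu) / 2) by (apply sqrt_sqrt; lra).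
  set (e := a0 * exp (- L) / 2).
  assert (He : 0 < e) by (unfold e; pose proof (exp_pos (- L)); apply Rdiv_lt_0_compat; [apply Rmult_lt_0_compat|]; lra).
  set (d := Rmin (e * e) ((1 - nu) / 2)).
  assert (Hd : 0 < d /\ d <= e * e /\ d <= (1 - nu) / 2).
  { unfold d, Rmin; destruct Rle_dec; nra. }
  set (m := 1 - d). assert (Hmdef : m = 1 - d) by reflexivity. clearbody m. exists m. split; [lra|].
  set (s := sqrt (1 - m)).
  assert (Hs : 0 < s) by (apply sqrt_lt_R0; lra).
  assert (Hs2 : s * s = 1 - m) by (apply sqrt_sqrt; lra).
  set (a := sqrt (m - nu)).
  assert (Ha2 : a * a = m - nu) by (apply sqrt_sqrt; lra).
  assert (Ha : 0 < a) by (apply sqrt_lt_R0; lra).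
  assert (Haa0 : a0 <= a) by (apply sqrt_le_1_alt; lra).
  assert (Hse : s <= e) by (rewrite <- (sqrt_square e) by lra; apply sqrt_le_1_alt; lra).
  assert (Hm : 1/2 < m < 1) by (lra).
  assert (Hk : forall t, 0 <= t <= a -> / (s + t) <= k m t).
  { intros t Ht. destruct (good_range nu m ltac:(lra) t Ht) as [_ Hg].
    pose proof (r_pos m t Hm Hg).
    pose proof (g_ub2 m t ltac:(lra)).
    assert (Hr2 : r m t * r m t = g m t / 2).
    { unfold r. apply sqrt_sqrt. pose proof (g_pos m t Hm Hg). lra. }
    assert (r m t <= s + t) by nra.
    unfold k. apply Rinv_le_contravar; lra. }
  assert (Hint : is_RInt (fun t => / (s + t)) 0 a (minus (ln (s + a)) (ln (s + 0)))).
  { apply (@is_RInt_derive R_CompleteNormedModule (fun t => ln (s + t))).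
    - intros x Hx. rewrite Rmin_left, Rmax_right in Hx by lra.
      auto_derive. lra. field. lra.
    - intros x Hx. rewrite Rmin_left, Rmax_right in Hx by lra.
      apply (ex_derive_continuous (fun t => / (s + t))). auto_derive. lra. }
  assert (Hexk : ex_RInt (k m) 0 a).
  { apply X_ex; auto. apply (proj1 (good_range nu m ltac:(lra) a ltac:(split; [lra|right; reflexivity]))). }
  pose proof (RInt_le (fun t => / (s + t)) (k m) 0 a ltac:(lra) (ex_intro _ _ Hint) Hexk
    ltac:(intros; apply Hk; lra)) as HR.
  rewrite (is_RInt_unique _ _ _ _ Hint) in HR.
  unfold minus, plus, opp in HR; simpl in HR. rewrite Rplus_0_r in HR.
  unfold Tm, X. fold a.
  assert (ln a0 <= ln (s + a)) by (apply ln_le; lra).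
  assert (Hls : ln s <= ln e) by (apply ln_le; lra).
  assert (Hle : ln e = ln a0 + - L + ln (/ 2)).
  { unfold e. unfold Rdiv. rewrite ln_mult, ln_mult, ln_exp; auto. apply exp_pos.
    apply Rmult_lt_0_compat; auto; apply exp_pos. lra. }
  assert (ln (/ 2) < 0) by (rewrite ln_Rinv by lra; assert (ln 1 < ln 2) by (apply ln_increasing; lra); rewrite ln_1 in *; lra).
  lra.
Qed.


Lemma mstar_ex nu L : 1/2 <= nu < 1 -> 0 < L -> exists m, nu < m < 1 /\ Tm nu m = L.
Proof.
  intros Hnu HL.
  destruct (Tm_small nu 1 L ltac:(lra) ltac:(lra) HL) as [m1 [Hm1 [_ H1]]].
  destruct (Tm_unbounded nu Hnu L) as [m2 [Hm2 H2]].
  assert (Hm12 : m1 < m2).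
  { apply Rnot_le_lt; intro Hle. destruct (Req_dec m1 m2) as [E|E]. subst; lra.
    assert (Tm nu m2 < Tm nu m1) by (apply Tm_incr; lra). lra. }
  destruct (IVT_rel m1 m2 (Tm nu) L ltac:(lra)) as [m [Hm E]].
  - apply Tm_cont_on; lra.
  - rewrite Rmin_left, Rmax_right; lra.
  - exists m; unfold Icc in Hm; split; [lra|auto].
Qed.

Definition mstar nu L := epsilon (inhabits 0) (fun m => nu < m < 1 /\ Tm nu m = L).
Definition phi nu L := phi0 nu (mstar nu L).

Lemma mstar_spec nu L : 1/2 <= nu < 1 -> 0 < L -> nu < mstar nu L < 1 /\ Tm nu (mstar nu L) = L.
Proof.
  intros. unfold mstar. apply (epsilon_spec (inhabits 0) (fun m => nu < m < 1 /\ Tm nu m = L)).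
  apply mstar_ex; auto.
Qed.

Lemma mstar_unique nu L m : 1/2 <= nu < 1 -> nu < m < 1 -> Tm nu m = L -> mstar nu L = m.
Proof.
  intros Hnu Hm E.
  assert (HL : 0 < L) by (rewrite <- E; pose proof (Tm_ge nu m ltac:(lra) ltac:(lra)); pose proof (a_pos nu m ltac:(lra)); lra).
  destruct (mstar_spec nu L Hnu HL) as [H1 H2].
  apply (Tm_inj nu); lra.
Qed.

Lemma mstar_incr nu L1 L2 : 1/2 <= nu < 1 -> 0 < L1 -> L1 < L2 -> mstar nu L1 < mstar nu L2.
Proof.
  intros Hnu H1 H12.
  destruct (mstar_spec nu L1 Hnu H1) as [A1 B1].
  destruct (mstar_spec nu L2 Hnu ltac:(lra)) as [A2 B2].
  apply Rnot_le_lt; intro Hle. destruct (Req_dec (mstar nu L1) (mstar nu L2)) as [E|E].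
  - rewrite E, B2 in B1. lra.
  - assert (Tm nu (mstar nu L2) < Tm nu (mstar nu L1)) by (apply Tm_incr; lra). lra.
Qed.

Lemma mstar_cont nu0 L0 : 1/2 <= nu0 < 1 -> 0 < L0 ->
  forall eps, 0 < eps -> exists delta, 0 < delta /\ forall nu L, 1/2 <= nu < 1 -> 0 < L ->
    Rabs (nu - nu0) < delta -> Rabs (L - L0) < delta -> Rabs (mstar nu L - mstar nu0 L0) < eps.
Proof.
  intros Hnu0 HL0 eps Heps.
  destruct (mstar_spec nu0 L0 Hnu0 HL0) as [Hm0 E0].
  set (m0 := mstar nu0 L0) in *.
  set (e := Rmin eps (Rmin ((m0 - nu0)/2) ((1 - m0)/2))).
  assert (He : 0 < e /\ e <= eps /\ e <= (m0 - nu0)/2 /\ e <= (1-m0)/2).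
  { unfold e, Rmin; repeat destruct Rle_dec; lra. }
  assert (T1 : Tm nu0 (m0 - e) < L0) by (rewrite <- E0; apply Tm_incr; lra).
  assert (T2 : L0 < Tm nu0 (m0 + e)) by (rewrite <- E0; apply Tm_incr; lra).
  set (gap := Rmin (L0 - Tm nu0 (m0 - e)) (Tm nu0 (m0 + e) - L0)).
  assert (Hgap : 0 < gap /\ gap <= L0 - Tm nu0 (m0 - e) /\ gap <= Tm nu0 (m0 + e) - L0).
  { unfold gap, Rmin; destruct Rle_dec; lra. }
  destruct (Tm_cont_nu nu0 (m0 - e) ltac:(lra) ltac:(lra) (gap/2) ltac:(lra)) as [d1 [Hd1 C1]].
  destruct (Tm_cont_nu nu0 (m0 + e) ltac:(lra) ltac:(lra) (gap/2) ltac:(lra)) as [d2 [Hd2 C2]].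
  set (d := Rmin (Rmin d1 d2) (Rmin (gap/2) ((m0 - e - nu0)/2))).
  assert (Hd : 0 < d /\ d <= d1 /\ d <= d2 /\ d <= gap/2 /\ d <= (m0 - e - nu0)/2).
  { unfold d, Rmin; repeat destruct Rle_dec; lra. }
  exists d. split; [lra|]. intros nu L Hnu HL Hnud HLd.
  assert (Hnur : nu0 - d < nu < nu0 + d) by (unfold Rabs in Hnud; destruct Rcase_abs; lra).
  assert (HLr : L0 - d < L < L0 + d) by (unfold Rabs in HLd; destruct Rcase_abs; lra).
  assert (A1 : Rabs (Tm nu (m0 - e) - Tm nu0 (m0 - e)) < gap / 2) by (apply C1; lra).
  assert (A2 : Rabs (Tm nu (m0 + e) - Tm nu0 (m0 + e)) < gap / 2) by (apply C2; lra).
  apply Rabs_def2 in A1. apply Rabs_def2 in A2.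
  destruct (mstar_spec nu L Hnu HL) as [Hm E].
  assert (Hlo : m0 - e < mstar nu L).
  { apply Rnot_le_lt; intro Hle. destruct (Req_dec (mstar nu L) (m0 - e)) as [Q|Q].
    - rewrite Q in E. lra.
    - assert (Tm nu (mstar nu L) < Tm nu (m0 - e)) by (apply Tm_incr; lra). lra. }
  assert (Hhi : mstar nu L < m0 + e).
  { apply Rnot_le_lt; intro Hle. destruct (Req_dec (mstar nu L) (m0 + e)) as [Q|Q].
    - rewrite Q in E. lra.
    - assert (Tm nu (m0 + e) < Tm nu (mstar nu L)) by (apply Tm_incr; lra). lra. }
  apply Rabs_def1; lra.
Qed.


Definition gs nu := sqrt (2 * (F 1 - F nu)).

Lemma F_diff x y : F x - F y = (x - y) * ((x + y) / 2 - (x*x + x*y + y*y) / 3).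
Proof. unfold F; field. Qed.

Lemma F_lip x y : 0 <= x <= 1 -> 0 <= y <= 1 -> Rabs (F x - F y) <= Rabs (x - y).
Proof.
  intros Hx Hy. rewrite F_diff, Rabs_mult.
  rewrite <- (Rmult_1_r (Rabs (x - y))) at 2.
  apply Rmult_le_compat_l; [apply Rabs_pos|]. apply Rabs_le. split; nra.
Qed.

Lemma F_incr x y : 1/2 <= x -> x < y -> y <= 1 -> F x < F y.
Proof.
  intros H1 H2 H3. assert (0 < F y - F x); [|lra].
  rewrite F_diff. apply Rmult_lt_0_compat; [lra|].
  assert (0 < x * (3 - 2*x - y)) by (apply Rmult_lt_0_compat; lra).
  assert (0 <= y * (3 - x - 2*y)) by (apply Rmult_le_pos; lra).
  nra.
Qed.

Lemma F1_minus nu : 2 * (F 1 - F nu) = (1 - nu) * (1 - nu) * (1 + 2 * nu) / 3.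
Proof. unfold F; field. Qed.

Lemma gs_pos nu : 1/2 <= nu < 1 -> 0 < gs nu.
Proof. intros. unfold gs. apply sqrt_lt_R0. rewrite F1_minus.
  apply Rdiv_lt_0_compat; [|lra]. apply Rmult_lt_0_compat; [|lra]. nra. Qed.

Lemma gs_decr nu1 nu2 : 1/2 <= nu1 -> nu1 < nu2 -> nu2 < 1 -> gs nu2 < gs nu1.
Proof.
  intros. unfold gs. apply sqrt_lt_1_alt. split.
  rewrite F1_minus. apply Rmult_le_pos; [|lra]. apply Rmult_le_pos; nra.
  pose proof (F_incr nu1 nu2 H H0 ltac:(lra)). lra.
Qed.

Lemma gs_small nu : 1/2 <= nu < 1 -> gs nu <= 1 - nu.
Proof.
  intros. unfold gs. rewrite F1_minus.
  apply Rle_trans with (sqrt ((1 - nu) * (1 - nu))).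
  apply sqrt_le_1_alt. unfold Rdiv. rewrite Rmult_assoc.
  rewrite <- (Rmult_1_r ((1 - nu) * (1 - nu))) at 2. apply Rmult_le_compat_l. nra. lra.
  rewrite sqrt_square; lra.
Qed.

Section PhiProps.
Variables nu L : R.
Hypothesis Hnu : 1/2 <= nu < 1.
Hypothesis HL : 0 < L.

Let m := mstar nu L.
Lemma m_spec : nu < m < 1 /\ Tm nu m = L.
Proof. apply mstar_spec; auto. Qed.

Lemma phi_eq : phi nu L = sqrt (2 * (F m - F nu)).
Proof.
  destruct m_spec as [H1 H2]. unfold phi. fold m.
  pose proof (phi0_pos nu m ltac:(lra) ltac:(lra)).
  rewrite <- (phi0_sq nu m ltac:(lra) ltac:(lra)). rewrite sqrt_square; lra.
Qed.

Lemma phi_pos : 0 < phi nu L.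
Proof. destruct m_spec as [H1 H2]. unfold phi; fold m. apply phi0_pos; lra. Qed.

Lemma phi_le_half : phi nu L <= L / 2.
Proof.
  destruct m_spec as [H1 H2]. unfold phi; fold m.
  pose proof (phi0_le nu m ltac:(lra) ltac:(lra)).
  pose proof (Tm_ge nu m ltac:(lra) ltac:(lra)). lra.
Qed.

Lemma phi_lt_gs : phi nu L < gs nu.
Proof.
  destruct m_spec as [H1 H2]. rewrite phi_eq. unfold gs. apply sqrt_lt_1_alt. split.
  pose proof (F_incr nu m ltac:(lra) ltac:(lra) ltac:(lra)). lra.
  pose proof (F_incr m 1 ltac:(lra) ltac:(lra) ltac:(lra)). lra.
Qed.

Lemma phi_gap : gs nu - phi nu L <= 4 / (L * L * gs nu).
Proof.
  destruct m_spec as [H1 H2].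
  pose proof (gs_pos nu Hnu) as Hg. pose proof phi_pos as Hp.
  pose proof (Tm_le nu m ltac:(lra) ltac:(lra)) as HT. rewrite H2 in HT.
  set (s := sqrt (m * (1 - m) / 2)) in HT.
  assert (Hs : 0 < s) by (apply sqrt_lt_R0; nra).
  assert (Hs2 : s * s = m * (1 - m) / 2) by (apply sqrt_sqrt; nra).
  set (a := sqrt (m - nu)) in HT.
  assert (Ha2 : a * a = m - nu) by (apply sqrt_sqrt; lra).
  assert (Ha : 0 < a) by (apply sqrt_lt_R0; lra).
  assert (HLs : L * s <= a).
  { apply (Rmult_le_reg_r (/ s)). apply Rinv_0_lt_compat; lra.
    rewrite Rmult_assoc, Rinv_r, Rmult_1_r by lra. exact HT. }
  assert (H1m : L * L * (1 - m) <= 4).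
  { assert (L * s * (L * s) <= a * a) by (apply Rmult_le_compat; nra). nra. }
  assert (Hdiff : gs nu * gs nu - phi nu L * phi nu L <= (1 - m) * (1 - m)).
  { unfold gs. rewrite sqrt_sqrt. rewrite phi_eq, sqrt_sqrt.
    - replace (2 * (F 1 - F nu) - 2 * (F m - F nu)) with ((1-m)*(1-m)*((1+2*m)/3)) by (unfold F; field).
      rewrite <- (Rmult_1_r ((1 - m) * (1 - m))) at 2. apply Rmult_le_compat_l. nra. lra.
    - pose proof (F_incr nu m ltac:(lra) ltac:(lra) ltac:(lra)). lra.
    - rewrite F1_minus. apply Rmult_le_pos; [|lra]. apply Rmult_le_pos; nra. }
  assert (Hq : gs nu - phi nu L <= (1 - m) * (1 - m) / gs nu).
  { apply (Rmult_le_reg_r (gs nu)); auto. unfold Rdiv. rewrite Rmult_assoc, Rinv_l, Rmult_1_r by lra.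
    pose proof phi_lt_gs. nra. }
  eapply Rle_trans; [exact Hq|].
  unfold Rdiv. rewrite Rinv_mult, <- Rmult_assoc.
  apply Rmult_le_compat_r. left; apply Rinv_0_lt_compat; lra.
  apply (Rmult_le_reg_l (L * L)). nra.
  replace (L * L * (4 * / (L * L))) with 4 by (field; lra).
  assert ((1 - m) * (1 - m) <= 1 - m) by nra. nra.
Qed.

End PhiProps.

Lemma phi_incr nu L1 L2 : 1/2 <= nu < 1 -> 0 < L1 -> L1 < L2 -> phi nu L1 < phi nu L2.
Proof.
  intros Hnu H1 H12.
  pose proof (mstar_incr nu L1 L2 Hnu H1 H12).
  destruct (mstar_spec nu L1 Hnu H1). destruct (mstar_spec nu L2 Hnu ltac:(lra)).
  rewrite (phi_eq nu L1), (phi_eq nu L2) by lra.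
  apply sqrt_lt_1_alt. split.
  - pose proof (F_incr nu (mstar nu L1) ltac:(lra) ltac:(lra) ltac:(lra)). lra.
  - pose proof (F_incr (mstar nu L1) (mstar nu L2) ltac:(lra) ltac:(lra) ltac:(lra)). lra.
Qed.

Lemma phi_cont nu0 L0 : 1/2 <= nu0 < 1 -> 0 < L0 ->
  forall eps, 0 < eps -> exists delta, 0 < delta /\ forall nu L, 1/2 <= nu < 1 -> 0 < L ->
    Rabs (nu - nu0) < delta -> Rabs (L - L0) < delta -> Rabs (phi nu L - phi nu0 L0) < eps.
Proof.
  intros Hnu0 HL0 eps Heps.
  set (e := eps * eps / 4).
  assert (He : 0 < e) by (unfold e; nra).
  destruct (mstar_cont nu0 L0 Hnu0 HL0 e He) as [d [Hd H]].
  exists (Rmin d e). split. unfold Rmin; destruct Rle_dec; lra.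
  intros nu L Hnu HL Hn HLL.
  assert (Hn1 : Rabs (nu - nu0) < d) by (eapply Rlt_le_trans; [exact Hn|apply Rmin_l]).
  assert (Hn2 : Rabs (nu - nu0) < e) by (eapply Rlt_le_trans; [exact Hn|apply Rmin_r]).
  assert (HL1 : Rabs (L - L0) < d) by (eapply Rlt_le_trans; [exact HLL|apply Rmin_l]).
  specialize (H nu L Hnu HL Hn1 HL1).
  destruct (mstar_spec nu L Hnu HL) as [Hm _]. destruct (mstar_spec nu0 L0 Hnu0 HL0) as [Hm0 _].
  rewrite (phi_eq nu L), (phi_eq nu0 L0) by auto.
  pose proof (F_incr nu (mstar nu L) ltac:(lra) ltac:(lra) ltac:(lra)).
  pose proof (F_incr nu0 (mstar nu0 L0) ltac:(lra) ltac:(lra) ltac:(lra)).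
  eapply Rle_lt_trans; [apply sqrt_diff; lra|].
  rewrite <- (sqrt_square eps) by lra. apply sqrt_lt_1_alt. split; [apply Rabs_pos|].
  replace (2 * (F (mstar nu L) - F nu) - 2 * (F (mstar nu0 L0) - F nu0)) with
    (2 * ((F (mstar nu L) - F (mstar nu0 L0)) - (F nu - F nu0))) by ring.
  rewrite Rabs_mult, Rabs_right by lra.
  pose proof (F_lip (mstar nu L) (mstar nu0 L0) ltac:(lra) ltac:(lra)).
  pose proof (F_lip nu nu0 ltac:(lra) ltac:(lra)).
  assert (Rabs ((F (mstar nu L) - F (mstar nu0 L0)) - (F nu - F nu0)) <=
    Rabs (F (mstar nu L) - F (mstar nu0 L0)) + Rabs (F nu - F nu0)).
  { unfold Rminus at 1. eapply Rle_trans; [apply Rabs_triang|rewrite Rabs_Ropp; lra]. }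
  unfold e in *. lra.
Qed.

Lemma phi_decr_nu nu1 nu2 L : 1/2 <= nu1 -> nu1 < nu2 -> nu2 < 1 -> 0 < L ->
  phi nu2 L < phi nu1 L.
Proof.
  intros H1 H12 H2 HL.
  destruct (mstar_spec nu1 L ltac:(lra) HL) as [Hm1 E1].
  destruct (mstar_spec nu2 L ltac:(lra) HL) as [Hm2 E2].
  unfold phi.
  set (m1 := mstar nu1 L) in *. set (m2 := mstar nu2 L) in *.
  destruct (sol_of nu1 m1 ltac:(lra) ltac:(lra)) as [w [w1 [w2 [S1 [Wa [Wb [_ [W1 [WB _]]]]]]]]].
  destruct (sol_of nu2 m2 ltac:(lra) ltac:(lra)) as [v [v1 [v2 [S2 [Va [Vb [_ [V1 [VB _]]]]]]]]].
  rewrite E1 in S1, Wa, Wb, W1, WB. rewrite E2 in S2, Va, Vb, V1, VB.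
  rewrite <- W1, <- V1.
  apply (mono_sol (-L) L 1 1 nu1 nu2 w w1 w2 v v1 v2); try lra; auto.
  - intros x Hx. specialize (WB x Hx). lra.
  - intros x Hx. specialize (VB x Hx). lra.
Qed.


Definition C4 (D : R -> R -> R -> R -> Prop) (f : R -> R -> R -> R -> R) a b c d :=
  forall eps, 0 < eps -> exists delta, 0 < delta /\
    forall a' b' c' d', D a' b' c' d' ->
      Rabs (a' - a) < delta -> Rabs (b' - b) < delta -> Rabs (c' - c) < delta ->
      Rabs (d' - d) < delta ->
      Rabs (f a' b' c' d' - f a b c d) < eps.

Definition cont2_in (E : R -> R -> Prop) (h : R -> R -> R) x y :=
  forall eps, 0 < eps -> exists delta, 0 < delta /\ forall x' y', E x' y' ->
    Rabs (x' - x) < delta -> Rabs (y' - y) < delta -> Rabs (h x' y' - h x y) < eps.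

Section C4L.
Variable D : R -> R -> R -> R -> Prop.
Variables a b c d : R.

Lemma C4_p1 : C4 D (fun a _ _ _ => a) a b c d.
Proof. intros e He. exists e; split; auto. Qed.
Lemma C4_p2 : C4 D (fun _ b _ _ => b) a b c d.
Proof. intros e He. exists e; split; auto. Qed.
Lemma C4_p3 : C4 D (fun _ _ c _ => c) a b c d.
Proof. intros e He. exists e; split; auto. Qed.
Lemma C4_p4 : C4 D (fun _ _ _ d => d) a b c d.
Proof. intros e He. exists e; split; auto. Qed.

Lemma C4_comp2 (E : R -> R -> Prop) h f g :
  C4 D f a b c d -> C4 D g a b c d ->
  (forall a' b' c' d', D a' b' c' d' -> E (f a' b' c' d') (g a' b' c' d')) ->
  cont2_in E h (f a b c d) (g a b c d) ->
  C4 D (fun a b c d => h (f a b c d) (g a b c d)) a b c d.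
Proof.
  intros Hf Hg HE Hh eps Heps.
  destruct (Hh eps Heps) as [d0 [Hd0 H0]].
  destruct (Hf d0 Hd0) as [d1 [Hd1 H1]].
  destruct (Hg d0 Hd0) as [d2 [Hd2 H2]].
  exists (Rmin d1 d2). split. unfold Rmin; destruct Rle_dec; lra.
  intros a' b' c' d' HD Ha Hb Hc Hd.
  assert (Hm1 : Rmin d1 d2 <= d1) by apply Rmin_l. assert (Hm2 : Rmin d1 d2 <= d2) by apply Rmin_r.
  apply H0; [apply HE; auto| |].
  - apply H1; auto; lra.
  - apply H2; auto; lra.
Qed.

Lemma C4_comp1 h f : C4 D f a b c d -> continuity_pt h (f a b c d) ->
  C4 D (fun a b c d => h (f a b c d)) a b c d.
Proof.
  intros Hf Hh eps Heps.
  destruct (cont_pt_within (fun _ => True) h _ Hh eps Heps) as [d0 [Hd0 H0]].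
  destruct (Hf d0 Hd0) as [d1 [Hd1 H1]].
  exists d1. split; [auto|]. intros. apply H0; auto.
Qed.

End C4L.

Lemma c2d_in E h x y : continuity_2d_pt h x y -> cont2_in E h x y.
Proof.
  intros H eps Heps. destruct (H (mkposreal eps Heps)) as [d Hd].
  exists d. split. apply cond_pos. intros. apply Hd; auto.
Qed.

Lemma cont2_mult E x y : cont2_in E Rmult x y.
Proof.
  apply c2d_in. apply (continuity_2d_pt_mult (fun u v => u) (fun u v => v)).
  apply continuity_2d_pt_id1. apply continuity_2d_pt_id2.
Qed.

Lemma C4_mult D f g a b c d : C4 D f a b c d -> C4 D g a b c d ->
  C4 D (fun a b c d => f a b c d * g a b c d) a b c d.
Proof.
  intros Hf Hg. apply (C4_comp2 D a b c d (fun _ _ => True) Rmult f g Hf Hg).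
  auto. apply cont2_mult.
Qed.

Definition convex (D : R -> Prop) := forall x y z, D x -> D z -> x <= y <= z -> D y.

Lemma homeo_incr (D E : R -> Prop) f : convex D -> strict_incr_on D f -> cont_on D f ->
  (forall x, D x -> E (f x)) -> (forall y, E y -> exists x, D x /\ f x = y) ->
  homeo_onto D E f.
Proof.
  intros Hcv Hinc Hc Hmap Hsurj.
  set (G := fun y => epsilon (inhabits 0) (fun x => D x /\ f x = y)).
  assert (HG : forall y, E y -> D (G y) /\ f (G y) = y).
  { intros y Hy. unfold G. apply (epsilon_spec (inhabits 0) (fun x => D x /\ f x = y)). auto. }
  assert (Hinj : forall x1 x2, D x1 -> D x2 -> f x1 = f x2 -> x1 = x2).
  { intros x1 x2 H1 H2 E12. destruct (Rtotal_order x1 x2) as [Hl|[Hl|Hl]]; auto.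
    - pose proof (Hinc x1 x2 H1 H2 Hl). lra.
    - pose proof (Hinc x2 x1 H2 H1 Hl). lra. }
  assert (Hle : forall x1 x2, D x1 -> D x2 -> x1 <= x2 -> f x1 <= f x2).
  { intros x1 x2 H1 H2 Hl. destruct (Req_dec x1 x2) as [->|Hn]; [lra|].
    left; apply Hinc; auto; lra. }
  split; auto. split; auto. exists G.
  split; [intros; apply HG; auto|].
  split.
  2:{ split.
      - intros x Hx. destruct (HG (f x) (Hmap x Hx)) as [H1 H2]. apply Hinj; auto.
      - intros y Hy. apply HG; auto. }
  intros y0 Hy0 eps Heps.
  destruct (HG y0 Hy0) as [HD0 Hf0]. set (x0 := G y0) in *.
  set (x1 := x0 - eps / 2). set (x2 := x0 + eps / 2).
  assert (Hd1 : exists d1, 0 < d1 /\ forall y, E y -> Rabs (y - y0) < d1 -> x1 < G y).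
  { destruct (classic (D x1)) as [HD1|HD1].
    - exists (y0 - f x1). split.
      + assert (f x1 < f x0) by (apply Hinc; auto; unfold x1; lra). lra.
      + intros y Hy Hyd. destruct (HG y Hy) as [HDy Hfy].
        apply Rnot_le_lt; intro Hc'. pose proof (Hle _ _ HDy HD1 Hc').
        apply Rabs_def2 in Hyd. lra.
    - exists 1. split; [lra|]. intros y Hy _. destruct (HG y Hy) as [HDy _].
      apply Rnot_le_lt; intro Hc'. apply HD1. apply (Hcv (G y) x1 x0); auto. split; [lra|unfold x1; lra]. }
  assert (Hd2 : exists d2, 0 < d2 /\ forall y, E y -> Rabs (y - y0) < d2 -> G y < x2).
  { destruct (classic (D x2)) as [HD2|HD2].
    - exists (f x2 - y0). split.
      + assert (f x0 < f x2) by (apply Hinc; auto; unfold x2; lra). lra.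
      + intros y Hy Hyd. destruct (HG y Hy) as [HDy Hfy].
        apply Rnot_le_lt; intro Hc'. pose proof (Hle _ _ HD2 HDy Hc').
        apply Rabs_def2 in Hyd. lra.
    - exists 1. split; [lra|]. intros y Hy _. destruct (HG y Hy) as [HDy _].
      apply Rnot_le_lt; intro Hc'. apply HD2. apply (Hcv x0 x2 (G y)); auto. split; [unfold x2; lra|lra]. }
  destruct Hd1 as [d1 [Hd1 H1]]. destruct Hd2 as [d2 [Hd2 H2]].
  exists (Rmin d1 d2). split. unfold Rmin; destruct Rle_dec; lra.
  intros y Hy Hyd.
  assert (Rabs (y - y0) < d1) by (eapply Rlt_le_trans; [exact Hyd|apply Rmin_l]).
  assert (Rabs (y - y0) < d2) by (eapply Rlt_le_trans; [exact Hyd|apply Rmin_r]).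
  specialize (H1 y Hy H). specialize (H2 y Hy H0).
  apply Rabs_def1; unfold x1, x2 in *; lra.
Qed.

Lemma homeo_decr (D E : R -> Prop) f : convex D -> strict_decr_on D f -> cont_on D f ->
  (forall x, D x -> E (f x)) -> (forall y, E y -> exists x, D x /\ f x = y) ->
  homeo_onto D E f.
Proof.
  intros Hcv Hdec Hc Hmap Hsurj.
  destruct (homeo_incr (fun x => D (- x)) E (fun x => f (- x))) as [_ [_ [G [HG1 [HG2 [HG3 HG4]]]]]].
  - intros x y z Hx Hz Hy. apply (Hcv (-z) (-y) (-x)); auto; lra.
  - intros x y Hx Hy Hxy. apply Hdec; auto; lra.
  - intros x Hx eps Heps. destruct (Hc (- x) Hx eps Heps) as [d [Hd H]].
    exists d; split; auto. intros y Hy Hyx. apply H; auto.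
    replace (- y - - x) with (- (y - x)) by ring. rewrite Rabs_Ropp; auto.
  - intros x Hx; apply Hmap; auto.
  - intros y Hy. destruct (Hsurj y Hy) as [x [Hx Hfx]]. exists (- x).
    rewrite Ropp_involutive. auto.
  - split; auto. split; auto. exists (fun y => - G y).
    split; [intros; apply HG1; auto|]. split.
    + intros y Hy eps Heps. destruct (HG2 y Hy eps Heps) as [d [Hd H]].
      exists d; split; auto. intros z Hz Hzy.
      replace (- G z - - G y) with (- (G z - G y)) by ring. rewrite Rabs_Ropp; auto.
    + split.
      * intros x Hx. pose proof (HG3 (- x)) as H. rewrite !Ropp_involutive in H.
        rewrite H by auto. ring.
      * intros y Hy. apply HG4; auto.
Qed.


Lemma is_derive_eqR (f : R -> R) (x l l' : R) : is_derive f x l -> l = l' -> is_derive f x l'.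
Proof. intros H E; subst; auto. Qed.

Lemma deriv_within_ext D f g x l : (forall y, D y -> f y = g y) -> D x ->
  deriv_within D g x l -> deriv_within D f x l.
Proof.
  intros E Hx H eps Heps. destruct (H eps Heps) as [d [Hd H2]].
  exists d; split; auto. intros y Hy Hne Hyd. rewrite !E; auto.
Qed.

Lemma cont_within_ext D f g x : (forall y, D y -> f y = g y) -> D x ->
  cont_within D g x -> cont_within D f x.
Proof.
  intros E Hx H eps Heps. destruct (H eps Heps) as [d [Hd H2]].
  exists d; split; auto. intros y Hy Hyd. rewrite !E; auto.
Qed.

Lemma refl_deriv Rr f x l : deriv_within (Icc (- Rr) Rr) f (- x) l ->
  deriv_within (Icc (- Rr) Rr) (fun y => f (- y)) x (- l).
Proof.
  intros H eps Heps. destruct (H eps Heps) as [d [Hd H2]].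
  exists d; split; auto. intros y Hy Hne Hyd.
  assert (Hy' : Icc (- Rr) Rr (- y)) by (unfold Icc in *; lra).
  assert (Hne' : - y <> - x) by lra.
  assert (Hyd' : Rabs (- y - - x) < d) by (replace (- y - - x) with (- (y - x)) by ring; rewrite Rabs_Ropp; auto).
  specialize (H2 (- y) Hy' Hne' Hyd').
  replace ((f (- y) - f (- x)) / (y - x) - - l) with (- ((f (- y) - f (- x)) / (- y - - x) - l)).
  rewrite Rabs_Ropp; auto. field. lra.
Qed.

Lemma refl_cont Rr f x : cont_within (Icc (- Rr) Rr) f (- x) ->
  cont_within (Icc (- Rr) Rr) (fun y => f (- y)) x.
Proof.
  intros H eps Heps. destruct (H eps Heps) as [d [Hd H2]].
  exists d; split; auto. intros y Hy Hyd. apply H2.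
  unfold Icc in *; lra.
  replace (- y - - x) with (- (y - x)) by ring; rewrite Rabs_Ropp; auto.
Qed.

Lemma deriv_within_opp D f x l : deriv_within D f x l -> deriv_within D (fun y => - f y) x (- l).
Proof.
  intros H eps Heps. destruct (H eps Heps) as [d [Hd H2]].
  exists d; split; auto. intros y Hy Hne Hyd.
  replace ((- f y - - f x) / (y - x) - - l) with (- ((f y - f x) / (y - x) - l)) by (field; lra).
  rewrite Rabs_Ropp; auto.
Qed.

Lemma pos_sol_refl A M nu Rr w : pos_sol A M nu Rr w -> pos_sol A M nu Rr (fun x => w (- x)).
Proof.
  intros [w1 [w2 [HC [HE [Ha [Hb Hp]]]]]].
  exists (fun x => - w1 (- x)), (fun x => w2 (- x)).
  assert (Hs : forall x, Icc (- Rr) Rr x -> Icc (- Rr) Rr (- x)) by (unfold Icc; intros; lra).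
  split; [|split; [|split; [|split]]].
  - intros x Hx. destruct (HC (- x) (Hs x Hx)) as [D1 [D2 C3]]. split; [|split].
    + apply refl_deriv; auto.
    + pose proof (refl_deriv Rr (fun y => - w1 y) x (- w2 (- x)) (deriv_within_opp _ _ _ _ D2)) as H.
      rewrite Ropp_involutive in H. exact H.
    + apply refl_cont; auto.
  - intros x Hx. apply HE. lra.
  - simpl. rewrite Ropp_involutive. auto.
  - simpl. auto.
  - intros x Hx. apply Hp. auto.
Qed.

Lemma possol_soldata A M nu Rr w : 0 < Rr -> pos_sol A M nu Rr w ->
  exists w1 w2, soldata (- Rr) Rr A M w w1 w2 /\ w (- Rr) = nu * A /\ w Rr = nu * A /\
    (forall x, Icc (- Rr) Rr x -> 0 < w x).
Proof.
  intros HR [w1 [w2 [HC [HE [Ha [Hb Hp]]]]]].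
  exists w1, w2. split; auto. split; [|split].
  - intros x Hx. destruct (HC x ltac:(unfold Icc; lra)) as [D1 [D2 _]].
    split; [|split].
    + apply (deriv_within_interior (- Rr) Rr); auto.
    + apply (deriv_within_interior (- Rr) Rr); auto.
    + apply HE; auto.
  - intros x Hx. destruct (HC x Hx) as [D1 _]. apply (deriv_within_cont _ _ _ _ D1).
  - intros x Hx. destruct (HC x Hx) as [_ [D2 _]]. apply (deriv_within_cont _ _ _ _ D2).
Qed.

Definition Phi A M nu Rr := A * sqrt (M * A) * phi nu (sqrt (M * A) * Rr).
Definition gamma A M nu := A * sqrt (M * A) * gs nu.

Lemma build A M nu Rr : adm A M nu Rr ->
  exists w, pos_sol A M nu Rr w /\
    (forall x, - Rr < x < Rr -> nu * A < w x < A) /\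
    deriv_within (Icc (- Rr) Rr) w (- Rr) (Phi A M nu Rr).
Proof.
  intros [HA [HM [Hnu HR]]].
  set (c := sqrt (M * A)).
  assert (Hc : 0 < c) by (apply sqrt_lt_R0; nra).
  assert (Hc2 : c * c = M * A) by (apply sqrt_sqrt; nra).
  set (L := c * Rr).
  assert (HL : 0 < L) by (unfold L; nra).
  destruct (mstar_spec nu L Hnu HL) as [Hm ET].
  set (m := mstar nu L) in *.
  destruct (sol_of nu m ltac:(lra) ltac:(lra)) as
    [u [u1 [u2 [S [Ua [Ub [U0 [U1 [UB [UB2 [UD UE]]]]]]]]]]].
  rewrite ET in Ua, Ub, U1, UB, UB2, UD, UE.
  set (w := fun x => A * u (c * x)).
  set (w1 := fun x => A * c * u1 (c * x)).
  set (w2 := fun x => A * c * c * u2 (c * x)).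
  assert (Hin : forall x, Icc (- Rr) Rr x -> Icc (- L) L (c * x)).
  { intros x Hx. unfold Icc in *. unfold L. split; nra. }
  assert (Dlin : forall x, is_derive (fun x => c * x) x c).
  { intros x. auto_derive; auto. ring. }
  assert (Dw : forall x, Icc (- Rr) Rr x -> is_derive w x (w1 x) /\ is_derive w1 x (w2 x)).
  { intros x Hx. destruct (UD (c * x) (Hin x Hx)) as [D1 D2]. split.
    - pose proof (chain u (fun x => c * x) x _ _ D1 (Dlin x)) as H.
      pose proof (is_derive_scal _ x A _ H) as H'. unfold w, w1.
      eapply is_derive_eqR; [exact H'|]. ring.
    - pose proof (chain u1 (fun x => c * x) x _ _ D2 (Dlin x)) as H.
      pose proof (is_derive_scal _ x (A * c) _ H) as H'. unfold w1, w2.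
      eapply is_derive_eqR; [exact H'|]. ring. }
  exists w. split; [|split].
  - exists w1, w2. split; [|split; [|split; [|split]]].
    + intros x Hx. destruct (Dw x Hx) as [D1 D2]. split; [|split].
      * apply is_derive_within; auto.
      * apply is_derive_within; auto.
      * apply (cont_within_ext _ w2 (fun x => A * c * c * (u (c * x) * u (c * x) - u (c * x)))); auto.
        { intros y Hy. unfold w2. rewrite UE; auto. }
        apply cont_pt_within.
        assert (Hcu : continuity_pt (fun x => u (c * x)) x).
        { apply (is_derive_cont_pt _ _ (u1 (c * x) * c)). apply chain; auto. apply UD; auto. }
        apply continuity_pt_mult. apply continuity_pt_const; intros ? ?; auto.
        apply continuity_pt_minus; [apply continuity_pt_mult|]; auto.
    + intros x Hx. unfold w2, w.
      assert (Hi : Icc (- L) L (c * x)) by (apply Hin; unfold Icc; lra).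
      rewrite UE by auto.
      replace (A * c * c) with (A * (M * A)) by (rewrite Rmult_assoc, Hc2; ring). ring.
    + unfold w. replace (c * - Rr) with (- L) by (unfold L; ring). rewrite Ua. ring.
    + unfold w. fold L. rewrite Ub. ring.
    + intros x Hx. unfold w. destruct (UB (c * x) (Hin x Hx)). nra.
  - intros x Hx. unfold w.
    assert (Hi : - L < c * x < L) by (unfold L; split; nra).
    pose proof (UB2 (c * x) Hi). pose proof (UB (c * x) ltac:(unfold Icc; lra)). split; nra.
  - destruct (Dw (- Rr) ltac:(unfold Icc; lra)) as [D1 _].
    pose proof (is_derive_within (Icc (- Rr) Rr) _ _ _ D1) as H.
    replace (Phi A M nu Rr) with (w1 (- Rr)); auto.
    unfold w1, Phi. fold c L. replace (c * - Rr) with (- L) by (unfold L; ring). rewrite U1.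
    unfold phi. fold m. ring.
Qed.


Lemma uniq_possol A M nu Rr w v : adm A M nu Rr -> pos_sol A M nu Rr w -> pos_sol A M nu Rr v ->
  forall x, Icc (- Rr) Rr x -> w x = v x.
Proof.
  intros Had Hw Hv. pose proof Had as [HA [HM [Hnu HR]]].
  destruct (possol_soldata A M nu Rr w HR Hw) as [w1 [w2 [Sw [Wa [Wb Wp]]]]].
  destruct (possol_soldata A M nu Rr v HR Hv) as [v1 [v2 [Sv [Va [Vb Vp]]]]].
  pose proof (weak_bounds (- Rr) Rr A M nu w w1 w2 ltac:(lra) HA HM ltac:(lra) Sw Wa Wb Wp) as Bw.
  pose proof (weak_bounds (- Rr) Rr A M nu v v1 v2 ltac:(lra) HA HM ltac:(lra) Sv Va Vb Vp) as Bv.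
  apply (uniq_sol (- Rr) Rr A M w w1 w2 v v1 v2); auto; try lra.
  - intros x Hx. specialize (Bw x Hx). nra.
  - intros x Hx. specialize (Bv x Hx). nra.
Qed.

Lemma phi_lim nu : 1/2 <= nu < 1 -> forall e, 0 < e -> exists K, 0 < K /\ forall L, K < L ->
  0 < gs nu - phi nu L < e.
Proof.
  intros Hnu e He. pose proof (gs_pos nu Hnu) as Hg.
  set (K := 4 / (e * gs nu) + 1).
  assert (HK0 : 0 < 4 / (e * gs nu)) by (apply Rdiv_lt_0_compat; nra).
  exists K. split; [unfold K; lra|]. intros L HL.
  assert (HL1 : 1 < L) by (unfold K in HL; lra).
  pose proof (phi_lt_gs nu L Hnu ltac:(lra)).
  pose proof (phi_gap nu L Hnu ltac:(lra)).
  split; [lra|]. eapply Rle_lt_trans; [eassumption|].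
  apply (Rmult_lt_reg_r (L * L * gs nu)). apply Rmult_lt_0_compat; nra.
  unfold Rdiv. rewrite Rmult_assoc, Rinv_l, Rmult_1_r by (apply Rgt_not_eq; apply Rmult_lt_0_compat; nra).
  assert (4 / (e * gs nu) < L) by (unfold K in HL; lra).
  assert (4 < L * (e * gs nu)).
  { apply (Rmult_lt_reg_r (/ (e * gs nu))). apply Rinv_0_lt_compat; nra.
    rewrite Rmult_assoc, Rinv_r, Rmult_1_r by nra. exact H1. }
  nra.
Qed.

Lemma Phi_C4 A M nu Rr : adm A M nu Rr -> C4 adm Phi A M nu Rr.
Proof.
  intros Had. pose proof Had as [HA [HM [Hnu HR]]].
  assert (Cc : C4 adm (fun a b c d => sqrt (b * a)) A M nu Rr).
  { apply (C4_comp1 adm A M nu Rr sqrt (fun a b c d => b * a)).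
    - apply (C4_mult adm (fun a b c d => b) (fun a b c d => a)). apply C4_p2. apply C4_p1.
    - apply continuity_pt_sqrt. nra. }
  unfold Phi.
  apply (C4_mult adm (fun a b c d => a * sqrt (b * a)) (fun a b c d => phi c (sqrt (b * a) * d))).
  - apply (C4_mult adm (fun a b c d => a) (fun a b c d => sqrt (b * a))); auto. apply C4_p1.
  - apply (C4_comp2 adm A M nu Rr (fun x y => 1/2 <= x < 1 /\ 0 < y) phi
      (fun a b c d => c) (fun a b c d => sqrt (b * a) * d)).
    + apply C4_p3.
    + apply (C4_mult adm (fun a b c d => sqrt (b * a)) (fun a b c d => d)); auto. apply C4_p4.
    + intros a' b' c' d' [H1 [H2 [H3 H4]]]. split; auto.
      apply Rmult_lt_0_compat; auto. apply sqrt_lt_R0; nra.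
    + intros eps Heps.
      destruct (phi_cont nu (sqrt (M * A) * Rr) Hnu ltac:(apply Rmult_lt_0_compat; auto; apply sqrt_lt_R0; nra) eps Heps) as [d [Hd H]].
      exists d; split; auto. intros x' y' [E1 E2] H1 H2. apply H; auto.
Qed.

Lemma gs_cont nu : 1/2 <= nu < 1 -> continuity_pt gs nu.
Proof.
  intros Hnu. unfold gs.
  apply (continuity_pt_comp (fun nu => 2 * (F 1 - F nu)) sqrt).
  - apply continuity_pt_filterlim.
    apply (ex_derive_continuous (fun nu => 2 * (F 1 - F nu))). unfold F. auto_derive. auto.
  - apply continuity_pt_sqrt. rewrite F1_minus.
    apply Rmult_le_pos; [|lra]. apply Rmult_le_pos; [nra|lra].
Qed.

Lemma gamma_cont3 : cont3_on (fun A M nu => 0 < A /\ 0 < M /\ 1/2 <= nu < 1) gamma.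
Proof.
  intros A M nu [HA [HM Hnu]] eps Heps.
  set (D := fun a b c (_ : R) => 0 < a /\ 0 < b /\ 1/2 <= c < 1).
  assert (H : C4 D (fun a b c d => gamma a b c) A M nu 0).
  { unfold gamma.
    assert (Cc : C4 D (fun a b c d => sqrt (b * a)) A M nu 0).
    { apply (C4_comp1 D A M nu 0 sqrt (fun a b c d => b * a)).
      - apply (C4_mult D (fun a b c d => b) (fun a b c d => a)). apply C4_p2. apply C4_p1.
      - apply continuity_pt_sqrt. nra. }
    apply (C4_mult D (fun a b c d => a * sqrt (b * a)) (fun a b c d => gs c)).
    - apply (C4_mult D (fun a b c d => a) (fun a b c d => sqrt (b * a))); auto. apply C4_p1.
    - apply (C4_comp1 D A M nu 0 gs (fun a b c d => c)). apply C4_p3. apply gs_cont; auto. }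
  destruct (H eps Heps) as [d [Hd H2]]. exists d; split; auto.
  intros a' b' c' Hd' H1 H3 H4. apply (H2 a' b' c' 0); auto. rewrite Rminus_0_r, Rabs_R0; auto.
Qed.

Lemma Phi_cont_R A M nu : 0 < A -> 0 < M -> 1/2 <= nu < 1 ->
  cont_on (fun Rr => 0 < Rr) (Phi A M nu).
Proof.
  intros HA HM Hnu R0 HR0 eps Heps.
  destruct (Phi_C4 A M nu R0 (conj HA (conj HM (conj Hnu HR0))) eps Heps) as [d [Hd H]].
  exists d; split; auto. intros y Hy Hyd. apply H; auto;
  try (rewrite Rminus_diag, Rabs_R0; exact Hd).
  unfold adm. auto.
Qed.

Lemma Phi_cont_nu A M Rr : 0 < A -> 0 < M -> 0 < Rr ->
  cont_on (fun nu => 1/2 <= nu < 1) (fun nu => Phi A M nu Rr).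
Proof.
  intros HA HM HR nu0 Hnu0 eps Heps.
  destruct (Phi_C4 A M nu0 Rr (conj HA (conj HM (conj Hnu0 HR))) eps Heps) as [d [Hd H]].
  exists d; split; auto. intros y Hy Hyd. apply H; auto;
  try (rewrite Rminus_diag, Rabs_R0; exact Hd).
  unfold adm. auto.
Qed.

Lemma Phi_pos A M nu Rr : adm A M nu Rr -> 0 < Phi A M nu Rr.
Proof.
  intros [HA [HM [Hnu HR]]]. unfold Phi.
  assert (0 < sqrt (M * A)) by (apply sqrt_lt_R0; nra).
  pose proof (phi_pos nu (sqrt (M * A) * Rr) Hnu ltac:(nra)).
  apply Rmult_lt_0_compat; [apply Rmult_lt_0_compat|]; auto.
Qed.

Lemma Phi_small A M nu Rr : adm A M nu Rr -> Phi A M nu Rr <= A * (M * A) * Rr / 2.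
Proof.
  intros [HA [HM [Hnu HR]]]. unfold Phi.
  assert (Hc : 0 < sqrt (M * A)) by (apply sqrt_lt_R0; nra).
  assert (Hc2 : sqrt (M * A) * sqrt (M * A) = M * A) by (apply sqrt_sqrt; nra).
  pose proof (phi_le_half nu (sqrt (M * A) * Rr) Hnu ltac:(nra)).
  assert (0 < A * sqrt (M * A)) by nra.
  apply Rle_trans with (A * sqrt (M * A) * (sqrt (M * A) * Rr / 2)).
  apply Rmult_le_compat_l; lra.
  replace (A * (M * A) * Rr / 2) with (A * (sqrt (M * A) * sqrt (M * A)) * Rr / 2) by (rewrite Hc2; ring).
  right; field.
Qed.

Lemma Phi_gamma A M nu Rr : adm A M nu Rr ->
  gamma A M nu - Phi A M nu Rr = A * sqrt (M * A) * (gs nu - phi nu (sqrt (M * A) * Rr)).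
Proof. intros. unfold gamma, Phi. ring. Qed.

Lemma Phi_lt_gamma A M nu Rr : adm A M nu Rr -> Phi A M nu Rr < gamma A M nu.
Proof.
  intros Had. pose proof Had as [HA [HM [Hnu HR]]].
  assert (Hc : 0 < sqrt (M * A)) by (apply sqrt_lt_R0; nra).
  pose proof (phi_lt_gs nu (sqrt (M * A) * Rr) Hnu ltac:(nra)).
  pose proof (Phi_gamma A M nu Rr Had).
  assert (0 < A * sqrt (M * A) * (gs nu - phi nu (sqrt (M * A) * Rr))).
  { apply Rmult_lt_0_compat; [apply Rmult_lt_0_compat|]; lra. }
  lra.
Qed.

Lemma Phi_lim A M nu : 0 < A -> 0 < M -> 1/2 <= nu < 1 ->
  forall eps, 0 < eps -> exists K, 0 < K /\ forall Rr, K < Rr -> Rabs (Phi A M nu Rr - gamma A M nu) < eps.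
Proof.
  intros HA HM Hnu eps Heps.
  assert (Hc : 0 < sqrt (M * A)) by (apply sqrt_lt_R0; nra).
  set (c := sqrt (M * A)) in *.
  assert (HAc : 0 < A * c) by nra.
  destruct (phi_lim nu Hnu (eps / (A * c)) ltac:(apply Rdiv_lt_0_compat; lra)) as [K [HK H]].
  exists (K / c). split. apply Rdiv_lt_0_compat; lra.
  intros Rr HR.
  assert (HKR : K < c * Rr).
  { apply (Rmult_lt_reg_r (/ c)). apply Rinv_0_lt_compat; lra.
    replace (c * Rr * / c) with Rr by (field; lra). exact HR. }
  assert (Had : adm A M nu Rr).
  { repeat split; try lra. assert (0 < K / c) by (apply Rdiv_lt_0_compat; lra). lra. }
  specialize (H (c * Rr) HKR).
  rewrite Rabs_minus_sym. pose proof (Phi_gamma A M nu Rr Had) as E. fold c in E. rewrite E.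
  rewrite Rabs_right by (apply Rle_ge, Rmult_le_pos; lra).
  apply (Rmult_lt_reg_r (/ (A * c))). apply Rinv_0_lt_compat; lra.
  replace (A * c * (gs nu - phi nu (c * Rr)) * / (A * c)) with (gs nu - phi nu (c * Rr)) by (field; lra).
  lra.
Qed.


Lemma sqrt_lt_mono x y : 0 <= x -> x < y -> sqrt x < sqrt y.
Proof. intros. apply sqrt_lt_1_alt; lra. Qed.

Lemma pos3 A M : 0 < A -> 0 < M -> 0 < A * (M * A).
Proof. intros. apply Rmult_lt_0_compat; [lra|apply Rmult_lt_0_compat; lra]. Qed.

Theorem lemma2p2 :
  (* existence of a positive solution *)
  (forall A M nu Rr, adm A M nu Rr -> exists w, pos_sol A M nu Rr w) /\
  (* uniqueness on [-R,R] *)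
  (forall A M nu Rr w v, adm A M nu Rr -> pos_sol A M nu Rr w -> pos_sol A M nu Rr v ->
     forall x, Icc (- Rr) Rr x -> w x = v x) /\
  (* evenness and bounds *)
  (forall A M nu Rr w, adm A M nu Rr -> pos_sol A M nu Rr w ->
     (forall x, Icc (- Rr) Rr x -> w (- x) = w x) /\
     (forall x, - Rr < x < Rr -> nu * A < w x < A)) /\
  exists Phi : R -> R -> R -> R -> R,
    (* Phi(A,M,nu,R) = w'(-R) *)
    (forall A M nu Rr w, adm A M nu Rr -> pos_sol A M nu Rr w ->
       deriv_within (Icc (- Rr) Rr) w (- Rr) (Phi A M nu Rr)) /\
    (* (1) *)
    (forall A M nu Rr, adm A M nu Rr -> 0 < Phi A M nu Rr) /\
    cont4_on adm Phi /\
    (* (2) *)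
    (forall A M nu, 0 < A -> 0 < M -> 1/2 <= nu < 1 ->
       forall eps, 0 < eps -> exists delta, 0 < delta /\
         forall Rr, 0 < Rr < delta -> Rabs (Phi A M nu Rr) < eps) /\
    (* (3) *)
    (exists gamma : R -> R -> R -> R,
       (forall A M nu, 0 < A -> 0 < M -> 1/2 <= nu < 1 ->
          0 < gamma A M nu /\
          (forall eps, 0 < eps -> exists K, forall Rr, K < Rr ->
             Rabs (Phi A M nu Rr - gamma A M nu) < eps)) /\
       cont3_on (fun A M nu => 0 < A /\ 0 < M /\ 1/2 <= nu < 1) gamma /\
       (forall A1 A2 M nu, 0 < A1 -> A1 < A2 -> 0 < M -> 1/2 <= nu < 1 ->
          gamma A1 M nu < gamma A2 M nu) /\
       (forall A M1 M2 nu, 0 < A -> 0 < M1 -> M1 < M2 -> 1/2 <= nu < 1 ->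
          gamma A M1 nu < gamma A M2 nu) /\
       (forall A M nu1 nu2, 0 < A -> 0 < M -> 1/2 <= nu1 -> nu1 < nu2 -> nu2 < 1 ->
          gamma A M nu2 < gamma A M nu1) /\
       (forall A M, 0 < A -> 0 < M ->
          forall eps, 0 < eps -> exists delta, 0 < delta /\
            forall nu, 1/2 <= nu < 1 -> 1 - delta < nu -> Rabs (gamma A M nu) < eps) /\
       (forall A M nu, 0 < A -> 0 < M -> 1/2 < nu < 1 ->
          0 < gamma A M nu < gamma A M (1/2)) /\
       (* (4) *)
       (forall A M nu, 0 < A -> 0 < M -> 1/2 <= nu < 1 ->
          strict_incr_on (fun Rr => 0 < Rr) (Phi A M nu) /\
          homeo_onto (fun Rr => 0 < Rr) (fun y => 0 < y < gamma A M nu) (Phi A M nu))) /\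
    (* (5) *)
    (forall A M Rr, 0 < A -> 0 < M -> 0 < Rr ->
       strict_decr_on (fun nu => 1/2 <= nu < 1) (fun nu => Phi A M nu Rr) /\
       homeo_onto (fun nu => 1/2 <= nu < 1) (fun y => 0 < y <= Phi A M (1/2) Rr)
                  (fun nu => Phi A M nu Rr)).
Proof.
  split; [|split; [|split]].
  { intros A M nu Rr Had. destruct (build A M nu Rr Had) as [w [Hw _]]. exists w; auto. }
  { intros. eapply uniq_possol; eauto. }
  { intros A M nu Rr w Had Hw.
    destruct (build A M nu Rr Had) as [w0 [Hw0 [B0 _]]].
    pose proof (uniq_possol A M nu Rr w w0 Had Hw Hw0) as E.
    split.
    - intros x Hx. pose proof (uniq_possol A M nu Rr _ w Had (pos_sol_refl A M nu Rr w Hw) Hw x Hx) as E2.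
      exact E2.
    - intros x Hx. rewrite E by (unfold Icc; lra). apply B0; auto. }
  exists Phi.
  split; [|split; [|split; [|split; [|split]]]].
  - intros A M nu Rr w Had Hw.
    destruct (build A M nu Rr Had) as [w0 [Hw0 [_ D0]]].
    pose proof Had as [_ [_ [_ HR]]].
    apply (deriv_within_ext _ w w0); auto.
    + intros y Hy. apply (uniq_possol A M nu Rr w w0); auto.
    + unfold Icc; lra.
  - apply Phi_pos.
  - intros A M nu Rr Had. apply Phi_C4; auto.
  - intros A M nu HA HM Hnu eps Heps.
    pose proof (pos3 A M HA HM) as HAMA.
    exists (eps / (A * (M * A))). split. apply Rdiv_lt_0_compat; lra.
    intros Rr [HR HRd].
    assert (Had : adm A M nu Rr) by (repeat split; auto; lra).
    pose proof (Phi_pos A M nu Rr Had). pose proof (Phi_small A M nu Rr Had).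
    rewrite Rabs_right by lra.
    assert (A * (M * A) * Rr < eps).
    { apply (Rmult_lt_reg_r (/ (A * (M * A)))). apply Rinv_0_lt_compat; lra.
      replace (A * (M * A) * Rr * / (A * (M * A))) with Rr by (field; lra). exact HRd. }
    lra.
  - exists gamma.
    split; [|split; [|split; [|split; [|split; [|split; [|split]]]]]].
    + intros A M nu HA HM Hnu. split.
      * unfold gamma. pose proof (gs_pos nu Hnu).
        assert (0 < sqrt (M * A)) by (apply sqrt_lt_R0; nra).
        apply Rmult_lt_0_compat; [apply Rmult_lt_0_compat|]; auto.
      * intros eps Heps. destruct (Phi_lim A M nu HA HM Hnu eps Heps) as [K [HK H]].
        exists K; auto.
    + apply gamma_cont3.
    + intros A1 A2 M nu H1 H12 HM Hnu. unfold gamma. pose proof (gs_pos nu Hnu).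
      apply Rmult_lt_compat_r; auto.
      assert (sqrt (M * A1) < sqrt (M * A2)) by (apply sqrt_lt_mono; nra).
      assert (0 < sqrt (M * A1)) by (apply sqrt_lt_R0; nra). nra.
    + intros A M1 M2 nu HA H1 H12 Hnu. unfold gamma. pose proof (gs_pos nu Hnu).
      apply Rmult_lt_compat_r; auto. apply Rmult_lt_compat_l; auto.
      apply sqrt_lt_mono; nra.
    + intros A M nu1 nu2 HA HM H1 H12 H2. unfold gamma.
      assert (0 < sqrt (M * A)) by (apply sqrt_lt_R0; nra).
      apply Rmult_lt_compat_l; [nra|]. apply gs_decr; auto.
    + intros A M HA HM eps Heps.
      assert (Hc : 0 < sqrt (M * A)) by (apply sqrt_lt_R0; nra).
      exists (eps / (A * sqrt (M * A))). split. apply Rdiv_lt_0_compat; nra.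
      intros nu Hnu Hd. unfold gamma. pose proof (gs_pos nu Hnu). pose proof (gs_small nu Hnu).
      rewrite Rabs_right by (apply Rle_ge, Rmult_le_pos; nra).
      apply Rle_lt_trans with (A * sqrt (M * A) * (1 - nu)).
      apply Rmult_le_compat_l; nra.
      apply (Rmult_lt_reg_r (/ (A * sqrt (M * A)))). apply Rinv_0_lt_compat; nra.
      replace (A * sqrt (M * A) * (1 - nu) * / (A * sqrt (M * A))) with (1 - nu) by (field; nra).
      unfold Rdiv in Hd. lra.
    + intros A M nu HA HM Hnu. unfold gamma.
      assert (0 < sqrt (M * A)) by (apply sqrt_lt_R0; nra).
      pose proof (gs_pos nu ltac:(lra)). pose proof (gs_decr (1/2) nu ltac:(lra) ltac:(lra) ltac:(lra)).
      split. apply Rmult_lt_0_compat; nra. apply Rmult_lt_compat_l; nra.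
    + intros A M nu HA HM Hnu.
      assert (Hc : 0 < sqrt (M * A)) by (apply sqrt_lt_R0; nra).
      assert (Hinc : strict_incr_on (fun Rr => 0 < Rr) (Phi A M nu)).
      { intros x y Hx Hy Hxy. unfold Phi. apply Rmult_lt_compat_l; [nra|].
        apply phi_incr; auto; nra. }
      split; auto.
      apply homeo_incr; auto.
      * intros x y z Hx Hz Hy. lra.
      * apply Phi_cont_R; auto.
      * intros x Hx. assert (Had : adm A M nu x) by (repeat split; auto; lra).
        split. apply Phi_pos; auto. apply Phi_lt_gamma; auto.
      * intros y [Hy1 Hy2].
        pose proof (pos3 A M HA HM) as HAMA.
        set (R1 := y / (A * (M * A))).
        assert (HR1 : 0 < R1) by (unfold R1; apply Rdiv_lt_0_compat; lra).
        assert (P1 : Phi A M nu R1 < y).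
        { pose proof (Phi_small A M nu R1 ltac:(repeat split; auto; lra)).
          assert (A * (M * A) * R1 = y) by (unfold R1; field; lra). lra. }
        destruct (Phi_lim A M nu HA HM Hnu (gamma A M nu - y) ltac:(lra)) as [K [HK HKl]].
        set (R2 := Rmax K R1 + 1).
        assert (HR2 : K < R2 /\ R1 < R2) by (unfold R2, Rmax; destruct Rle_dec; lra).
        assert (P2 : y < Phi A M nu R2).
        { specialize (HKl R2 ltac:(lra)). apply Rabs_def2 in HKl. lra. }
        destruct (IVT_rel R1 R2 (Phi A M nu) y ltac:(lra)) as [x [Hx Ex]].
        -- intros z Hz. unfold Icc in Hz. apply (cont_within_sub (fun Rr => 0 < Rr)).
           intros q Hq; unfold Icc in Hq; lra.
           apply Phi_cont_R; auto; lra.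
        -- rewrite Rmin_left, Rmax_right; lra.
        -- exists x. unfold Icc in Hx. split; [lra|auto].
  - intros A M Rr HA HM HR.
    assert (Hc : 0 < sqrt (M * A)) by (apply sqrt_lt_R0; nra).
    assert (HAc : 0 < A * sqrt (M * A)) by nra.
    assert (Hdec : strict_decr_on (fun nu => 1/2 <= nu < 1) (fun nu => Phi A M nu Rr)).
    { intros x y Hx Hy Hxy. unfold Phi. apply Rmult_lt_compat_l; [nra|].
      apply phi_decr_nu; try lra. nra. }
    split; auto.
    apply homeo_decr; auto.
    + intros x y z Hx Hz Hy. split; lra.
    + apply Phi_cont_nu; auto.
    + intros x Hx. split.
      * apply Phi_pos. repeat split; auto; lra.
      * destruct (Req_dec x (1/2)) as [E|E].
        -- rewrite E; lra.
        -- left. apply Hdec; lra.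
    + intros y [Hy1 Hy2].
      destruct (Req_dec y (Phi A M (1/2) Rr)) as [E|E].
      { exists (1/2). split; [lra|auto]. }
      set (e := Rmin (1/4) (y / (2 * (A * sqrt (M * A))))).
      assert (He : 0 < e /\ e <= 1/4 /\ e <= y / (2 * (A * sqrt (M * A)))).
      { assert (0 < y / (2 * (A * sqrt (M * A)))) by (apply Rdiv_lt_0_compat; lra).
        unfold e, Rmin; destruct Rle_dec; lra. }
      set (nu1 := 1 - e).
      assert (Hnu1 : 1/2 < nu1 < 1) by (unfold nu1; lra).
      assert (P1 : Phi A M nu1 Rr < y).
      { assert (Had : adm A M nu1 Rr) by (repeat split; auto; lra).
        pose proof (Phi_lt_gamma A M nu1 Rr Had).
        pose proof (gs_small nu1 ltac:(lra)).
        assert (gamma A M nu1 <= A * sqrt (M * A) * e).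
        { unfold gamma. apply Rmult_le_compat_l; [lra|]. unfold nu1 in *; lra. }
        assert (A * sqrt (M * A) * e <= y / 2).
        { apply Rle_trans with (A * sqrt (M * A) * (y / (2 * (A * sqrt (M * A))))).
          apply Rmult_le_compat_l; lra. right; field; lra. }
        lra. }
      destruct (IVT_rel (1/2) nu1 (fun nu => Phi A M nu Rr) y ltac:(lra)) as [x [Hx Ex]].
      * intros z Hz. unfold Icc in Hz. apply (cont_within_sub (fun nu => 1/2 <= nu < 1)).
        intros q Hq; unfold Icc in Hq; split; lra.
        apply Phi_cont_nu; auto; split; lra.
      * rewrite Rmin_right, Rmax_left; lra.
      * exists x. unfold Icc in Hx. split; [split; lra|auto].
Qed.
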